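(* Let $\phi$ be an admissible action density and let $\tilde\phi$ be its partial Legendre transform. Then: (1) For every $\rho>0$ the map $w\mapsto\phi(\rho,w)^{1/p}$ is a norm on $\mathbb R^d$ whose dual norm is $z\mapsto\tilde\phi(\rho,z)^{1/q}$, i.e. $\tilde\phi(\rho,z)^{1/q}=\sup_{w\neq0}\frac{w\cdot z}{\phi(\rho,w)^{1/p}}$ and $\phi(\rho,w)^{1/p}=\sup_{z\ne0}\frac{w\cdot z}{\tilde\phi(\rho,z)^{1/q}}$; in particular $\tilde\phi(\rho,\cdot)$ is $q$-homogeneous. (2) $\tilde\phi$ takes values in $[0,\infty)$ and, for every $z\in\mathbb R^d$, $\rho\mapsto\tilde\phi(\rho,z)$ is concave and nondecreasing on $(0,\infty)$; for every $w\in\mathbb R^d$, $\rho\mapsto\phi(\rho,w)$ is convex and nonincreasing on $(0,\infty)$. (3) There exist constants $a,b\ge0$, not both zero, such that $\tilde\phi(\rho,z)\le(a+b\rho)|z|^q$ and $\phi(\rho,w)\ge(a+b\rho)^{1-p}|w|^p$ for all $\rho>0$, $z,w\in\mathbb R^d$. (4) For every compact interval $[\rho_0,\rho_1]\subset(0,\infty)$ there is $C>0$ such that for all $\rho\in[\rho_0,\rho_1]$ and $w,z\in\mathbb R^d$: $C^{-1}|w|^p\le\phi(\rho,w)\le C|w|^p$ and $C^{-1}|z|^q\le\tilde\phi(\rho,z)\le C|z|^q$. Conversely, a function $\phi:(0,\infty)\times\mathbb R^d\to[0,\infty)$ is an admissible action density if and only if it admits the representation $\frac1p\phi(\rho,w)=\sup_{z\in\mathbb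 R^d}\big(w\cdot z-\frac1q\tilde\phi(\rho,z)\big)$ for all $\rho>0,w\in\mathbb R^d$, for some function $\tilde\phi:(0,\infty)\times\mathbb R^d\to[0,\infty)$ which is convex and $q$-homogeneous in $z$, satisfies $\tilde\phi(\rho,z)>0$ for $z\neq0$, and is concave in $\rho$.
   Context: $p\in(1,\infty)$ and $q=p/(p-1)$. An admissible action density is a function $\phi:(0,\infty)\times\mathbb R^d\to[0,\infty)$ which is convex, satisfies $\phi(\rho,\lambda w)=|\lambda|^p\phi(\rho,w)$ for all $\rho>0,\lambda\in\mathbb R,w\in\mathbb R^d$, and for which there is $\rho_0>0$ with $\phi(\rho_0,w)>0$ for all $w\ne0$. Its partial Legendre transform $\tilde\phi:(0,\infty)\times\mathbb R^d\to(-\infty,+\infty]$ is defined by $\frac1q\tilde\phi(\rho,z):=\sup_{w\in\mathbb R^d}\big(z\cdot w-\frac1p\phi(\rho,w)\big)$. *)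

(* Defs.v *)
From Stdlib Require Import Reals Lra ClassicalEpsilon.
From mathcomp Require Import ssreflect ssrfun ssrbool eqtype ssrnat seq fintype bigop.

Open Scope R_scope.

Definition vec (d : nat) := 'I_d -> R.

Definition vzero {d} : vec d := fun _ => 0.
Definition vadd {d} (u v : vec d) : vec d := fun i => u i + v i.
Definition vscale {d} (l : R) (u : vec d) : vec d := fun i => l * u i.

Definition dot {d} (u v : vec d) : R := \big[Rplus/R0]_(i < d) (u i * v i).
Definition enorm {d} (u : vec d) : R := sqrt (dot u u).

(* x^a for x >= 0 and real a, with the convention 0^a = 0 *)
Definition rpow (x a : R) : R := if Rle_dec x 0 then 0 else Rpower x a.

Definition conj_exp (p : R) : R := p / (p - 1).

(* supremum of a set of reals (meaningful when the least upper bound exists) *)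
Definition sup (E : R -> Prop) : R := epsilon (inhabits 0) (fun l => is_lub E l).

(* The partial Legendre transform:
   (1/q) tphi(rho,z) = sup_w ( z.w - (1/p) phi(rho,w) );
   it is a genuine real number exactly when the set below is bounded above
   (the set is always nonempty). *)
Definition legendre_set {d} (p : R) (phi : R -> vec d -> R) (rho : R) (z : vec d)
  : R -> Prop := fun y => exists w : vec d, y = dot z w - phi rho w / p.

Definition legendre_finite {d} (p : R) (phi : R -> vec d -> R) (rho : R) (z : vec d)
  : Prop := bound (legendre_set p phi rho z).

Definition ptilde {d} (p : R) (phi : R -> vec d -> R) (rho : R) (z : vec d) : R :=
  conj_exp p * sup (legendre_set p phi rho z).

Definition jointly_convex {d} (phi : R -> vec d -> R) : Prop :=
  forall r1 r2 (w1 w2 : vec d) t, 0 < r1 -> 0 < r2 -> 0 <= t <= 1 ->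
    phi (t * r1 + (1 - t) * r2) (vadd (vscale t w1) (vscale (1 - t) w2))
    <= t * phi r1 w1 + (1 - t) * phi r2 w2.

Definition homog {d} (p : R) (phi : R -> vec d -> R) : Prop :=
  forall rho l (w : vec d), 0 < rho -> phi rho (vscale l w) = rpow (Rabs l) p * phi rho w.

Definition nonneg_fun {d} (phi : R -> vec d -> R) : Prop :=
  forall rho (w : vec d), 0 < rho -> 0 <= phi rho w.

Definition admissible {d} (p : R) (phi : R -> vec d -> R) : Prop :=
  nonneg_fun phi /\ jointly_convex phi /\ homog p phi /\
  exists rho0, 0 < rho0 /\ forall w : vec d, w <> vzero -> 0 < phi rho0 w.

Definition is_norm {d} (N : vec d -> R) : Prop :=
  (forall w, 0 <= N w) /\ (forall w, N w = 0 -> w = vzero) /\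
  (forall l w, N (vscale l w) = Rabs l * N w) /\
  (forall u v, N (vadd u v) <= N u + N v).

Definition convex_pos (f : R -> R) : Prop :=
  forall x y t, 0 < x -> 0 < y -> 0 <= t <= 1 ->
    f (t * x + (1 - t) * y) <= t * f x + (1 - t) * f y.
Definition concave_pos (f : R -> R) : Prop := convex_pos (fun x => - f x).
Definition nondecr_pos (f : R -> R) : Prop := forall x y, 0 < x -> x <= y -> f x <= f y.
Definition nonincr_pos (f : R -> R) : Prop := forall x y, 0 < x -> x <= y -> f y <= f x.

Definition convex_vec {d} (f : vec d -> R) : Prop :=
  forall (u v : vec d) t, 0 <= t <= 1 ->
    f (vadd (vscale t u) (vscale (1 - t) v)) <= t * f u + (1 - t) * f v.

(* Main.v *)
Require Import Defs.
From HB Require Import structures.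
From Stdlib Require Import Reals Lra Classical ClassicalEpsilon FunctionalExtensionality.
From mathcomp Require Import ssreflect ssrfun ssrbool eqtype ssrnat seq fintype bigop.
Open Scope R_scope.

Lemma rpow_gt0 x a : 0 < x -> rpow x a = Rpower x a.
Proof. intro H; unfold rpow; destruct (Rle_dec x 0); simpl; [lra|reflexivity]. Qed.
Lemma rpow_le0 x a : x <= 0 -> rpow x a = 0.
Proof. intro H; unfold rpow; destruct (Rle_dec x 0); simpl; [reflexivity|lra]. Qed.
Lemma Rpower_pos x a : 0 < Rpower x a.
Proof. unfold Rpower; apply exp_pos. Qed.
Lemma rpow_nonneg x a : 0 <= rpow x a.
Proof. unfold rpow; destruct (Rle_dec x 0); simpl; [lra|left; apply Rpower_pos]. Qed.
Lemma rpow_pos x a : 0 < x -> 0 < rpow x a.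
Proof. intro H; rewrite rpow_gt0 //; apply Rpower_pos. Qed.
Lemma rpow_0 a : rpow 0 a = 0.
Proof. apply rpow_le0; lra. Qed.
Lemma rpow_rpow x a b : 0 <= x -> rpow (rpow x a) b = rpow x (a*b).
Proof.
  intros [H|H].
  - rewrite (rpow_gt0 x a) // rpow_gt0; [|apply Rpower_pos]. rewrite Rpower_mult rpow_gt0 //.
  - subst; rewrite !rpow_0; reflexivity.
Qed.
Lemma rpow_1 x : 0 <= x -> rpow x 1 = x.
Proof. intros [H|H]; [rewrite rpow_gt0 // Rpower_1 //|subst; apply rpow_0]. Qed.
Lemma rpow_mult x y a : 0 <= x -> 0 <= y -> rpow (x*y) a = rpow x a * rpow y a.
Proof.
  intros [H|H] [H'|H'].
  - rewrite !rpow_gt0 //; [|nra]. rewrite Rpower_mult_distr //.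
  - subst; rewrite Rmult_0_r !rpow_0; ring.
  - subst; rewrite Rmult_0_l !rpow_0; ring.
  - subst; rewrite Rmult_0_l !rpow_0; ring.
Qed.
Lemma rpow_plus x a b : 0 < x -> rpow x (a+b) = rpow x a * rpow x b.
Proof. intro H; rewrite !rpow_gt0 // Rpower_plus //. Qed.
Lemma rpow_opp x a : 0 < x -> rpow x (-a) = / rpow x a.
Proof. intro H; rewrite !rpow_gt0 // Rpower_Ropp //. Qed.
Lemma rpow_le x y a : 0 < a -> 0 <= x <= y -> rpow x a <= rpow y a.
Proof.
  intros Ha [[Hx|Hx] Hxy].
  - rewrite !rpow_gt0; try lra. apply Rle_Rpower_l; lra.
  - subst; rewrite rpow_0; apply rpow_nonneg.
Qed.
Lemma rpow_lt x y a : 0 < a -> 0 <= x < y -> rpow x a < rpow y a.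
Proof.
  intros Ha [[Hx|Hx] Hxy].
  - rewrite !rpow_gt0; try lra. apply Rlt_Rpower_l; lra.
  - subst; rewrite rpow_0; apply rpow_pos; lra.
Qed.
Lemma rpow_eq0 x a : 0 <= x -> rpow x a = 0 -> x = 0.
Proof. intros [H|H] E; [have := rpow_pos x a H; lra|auto]. Qed.
Lemma rpow_inv_pow x a : 0 <= x -> a <> 0 -> rpow (rpow x a) (/a) = x.
Proof. intros H Ha; rewrite rpow_rpow // Rinv_r // rpow_1 //. Qed.
Lemma rpow_1l a : rpow 1 a = 1.
Proof. rewrite rpow_gt0; [|lra]. unfold Rpower; rewrite ln_1 Rmult_0_r exp_0 //. Qed.

Lemma exp_convex th X Y : 0 <= th <= 1 ->
  exp (th*X + (1-th)*Y) <= th * exp X + (1-th) * exp Y.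
Proof.
  intro Ht. set M := th*X + (1-th)*Y.
  have E1 : exp X = exp M * exp (X - M) by rewrite -exp_plus; f_equal; ring.
  have E2 : exp Y = exp M * exp (Y - M) by rewrite -exp_plus; f_equal; ring.
  have H1 := exp_ineq1_le (X - M). have H2 := exp_ineq1_le (Y - M).
  have HM := exp_pos M.
  rewrite E1 E2.
  have : th * (exp M * (1 + (X-M))) + (1-th) * (exp M * (1 + (Y - M))) = exp M.
  { unfold M; ring. }
  intro E. 
  have A : th * (exp M * (1 + (X-M))) <= th * (exp M * exp (X - M)).
  { apply Rmult_le_compat_l; [lra|]. apply Rmult_le_compat_l; lra. }
  have B : (1-th) * (exp M * (1 + (Y-M))) <= (1-th) * (exp M * exp (Y - M)).
  { apply Rmult_le_compat_l; [lra|]. apply Rmult_le_compat_l; lra. }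
  lra.
Qed.

Lemma conj_exp_gt1 r : 1 < r -> 1 < conj_exp r.
Proof. intro H; unfold conj_exp. apply (Rmult_lt_reg_r (r-1)); [lra|].
  unfold Rdiv; rewrite Rmult_assoc Rinv_l; lra. Qed.
Lemma conj_exp_inv r : 1 < r -> / r + / conj_exp r = 1.
Proof. intro H; unfold conj_exp; field; lra. Qed.
Lemma conj_exp_invol r : 1 < r -> conj_exp (conj_exp r) = r.
Proof. intro H; unfold conj_exp; field; split; lra. Qed.

Lemma young a b r : 1 < r -> 0 <= a -> 0 <= b ->
  a * b <= rpow a r / r + rpow b (conj_exp r) / conj_exp r.
Proof.
  intros Hr [Ha|Ha] [Hb|Hb].
  - set r' := conj_exp r. have Hr' := conj_exp_gt1 r Hr. have Hi := conj_exp_inv r Hr.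
    rewrite !rpow_gt0 //. unfold Rpower.
    have E : a * b = exp (/r * (r * ln a) + (1 - /r) * (r' * ln b)).
    { replace (1 - /r) with (/ r') by (fold r' in Hi; lra).
      replace (/r * (r * ln a) + / r' * (r' * ln b)) with (ln a + ln b) by (field; unfold r'; have := conj_exp_gt1 r Hr; lra).
      rewrite exp_plus !exp_ln //. }
    rewrite E. have := exp_convex (/r) (r * ln a) (r' * ln b).
    have : 0 < / r < 1. { split; [apply Rinv_0_lt_compat; lra|]. rewrite -Rinv_1. apply Rinv_lt_contravar; lra. }
    intros H1 H2. have H3 := H2 ltac:(lra). unfold Rdiv.
    replace (1 - /r) with (/ r') in H3 |- * by (fold r' in Hi; lra). lra.
  - subst. rewrite Rmult_0_r rpow_0. have := rpow_nonneg a r. have : 0 < r by lra. intros. 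
    unfold Rdiv; rewrite Rmult_0_l. apply Rplus_le_le_0_compat; [|lra]. apply Rmult_le_pos; [lra|left; apply Rinv_0_lt_compat; lra].
  - subst. rewrite Rmult_0_l rpow_0. have := rpow_nonneg b (conj_exp r). have := conj_exp_gt1 r Hr. intros.
    unfold Rdiv; rewrite Rmult_0_l. apply Rplus_le_le_0_compat; [lra|]. apply Rmult_le_pos; [lra|left; apply Rinv_0_lt_compat; lra].
  - subst. rewrite Rmult_0_l !rpow_0. lra.
Qed.
Lemma sup_spec (E : R -> Prop) : bound E -> (exists x, E x) -> is_lub E (sup E).
Proof.
  intros Hb Hne. destruct (completeness E Hb Hne) as [m Hm].
  unfold sup. apply (epsilon_spec (inhabits 0) (fun l => is_lub E l)). exists m; exact Hm.
Qed.
Lemma sup_eq (E : R -> Prop) l : is_lub E l -> sup E = l.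
Proof.
  intro H. have Hb : bound E by exists l; apply H.
  have Hne : exists x, E x.
  { apply NNPP; intro N. have : is_upper_bound E (l - 1).
    { intros y Hy; exfalso; apply N; exists y; exact Hy. }
    intro U. have := proj2 H _ U. lra. }
  apply (is_lub_u E); [apply sup_spec|]; auto.
Qed.
Lemma le_lub (E : R -> Prop) l y : is_lub E l -> E y -> y <= l.
Proof. intros H Hy; apply H; exact Hy. Qed.
Lemma lub_le (E : R -> Prop) l M : is_lub E l -> (forall y, E y -> y <= M) -> l <= M.
Proof. intros H HM; apply H; intros y Hy; apply HM; exact Hy. Qed.
Lemma lub_approx (E : R -> Prop) l eps : is_lub E l -> 0 < eps -> exists y, E y /\ l - eps < y.
Proof.
  intros H He. apply NNPP; intro N.
  have : l <= l - eps. { apply (lub_le E); auto. intros y Hy. apply Rnot_lt_le; intro C; apply N; exists y; auto. }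
  lra.
Qed.
Lemma is_lub_intro (E : R -> Prop) l :
  (forall y, E y -> y <= l) -> (forall eps, 0 < eps -> exists y, E y /\ l - eps < y) -> is_lub E l.
Proof.
  intros H1 H2; split; [intros y Hy; apply H1; exact Hy|].
  intros M HM. apply Rnot_lt_le; intro C. destruct (H2 (l - M)) as [y [Ey Hy]]; [lra|].
  have := HM y Ey. lra.
Qed.

Definition infR (f : R -> R) : R := - sup (fun y => exists t, y = - f t).
Lemma infR_spec f m : (forall t, m <= f t) ->
  is_lub (fun y => exists t, y = - f t) (- infR f).
Proof.
  intro Hm. unfold infR. rewrite Ropp_involutive. apply sup_spec.
  - exists (-m). intros y [t ->]. have := Hm t. lra.
  - exists (- f 0), 0; reflexivity.
Qed.
Lemma inf_le f m t : (forall t, m <= f t) -> infR f <= f t.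
Proof.
  intro Hm. have H := infR_spec f m Hm. have : - f t <= - infR f by apply (le_lub _ _ _ H); exists t; reflexivity. lra.
Qed.
Lemma le_inf f M : (forall t, M <= f t) -> M <= infR f.
Proof.
  intro Hm. have H := infR_spec f M Hm.
  have : - infR f <= - M. { apply (lub_le _ _ _ H). intros y [t ->]. have := Hm t. lra. }
  lra.
Qed.
Lemma Rplus_assoc' : associative Rplus. Proof. intros a b c; ring. Qed.
Lemma Rplus_comm' : commutative Rplus. Proof. intros a b; ring. Qed.
Lemma Rplus_0_l' : left_id R0 Rplus. Proof. intros a; ring. Qed.
HB.instance Definition _ := Monoid.isComLaw.Build R R0 Rplus Rplus_assoc' Rplus_comm' Rplus_0_l'.

Lemma vec_ext {d} (u v : vec d) : (forall i, u i = v i) -> u = v.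
Proof. intro H; apply functional_extensionality; exact H. Qed.

Definition ebas {d} (k : 'I_d) : vec d := fun i => if i == k then 1 else 0.
Definition sum1 {d} (v : vec d) : R := \big[Rplus/R0]_(i < d) Rabs (v i).
Definition sumc (d : nat) : R := \big[Rplus/R0]_(i < d) 1.

Lemma sum_le {d} (F G : 'I_d -> R) : (forall i, F i <= G i) ->
  \big[Rplus/R0]_(i < d) F i <= \big[Rplus/R0]_(i < d) G i.
Proof.
  intro H. apply: (big_rec2 (fun a b => a <= b)); [lra|]. intros i a b _ Hab. have := H i. lra.
Qed.
Lemma sum_nonneg {d} (F : 'I_d -> R) : (forall i, 0 <= F i) -> 0 <= \big[Rplus/R0]_(i < d) F i.
Proof. intro H. apply: (big_rec (fun a => 0 <= a)); [lra|]. intros i a _ Ha. have := H i. lra. Qed.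
Lemma sum_scal {d} (F : 'I_d -> R) c : \big[Rplus/R0]_(i < d) (c * F i) = c * \big[Rplus/R0]_(i < d) F i.
Proof.
  symmetry. apply: (big_morph (fun x => c * x)). intros x y; ring. ring.
Qed.
Lemma sum_abs {d} (F : 'I_d -> R) : Rabs (\big[Rplus/R0]_(i < d) F i) <= \big[Rplus/R0]_(i < d) Rabs (F i).
Proof.
  apply: (big_rec2 (fun a b => Rabs a <= b)). rewrite Rabs_R0; lra.
  intros i a b _ Hab. have := Rabs_triang (F i) a. lra.
Qed.
Lemma sum_plus {d} (F G : 'I_d -> R) : \big[Rplus/R0]_(i < d) (F i + G i)
  = \big[Rplus/R0]_(i < d) F i + \big[Rplus/R0]_(i < d) G i.
Proof. apply big_split. Qed.
Lemma sum_term {d} (F : 'I_d -> R) k : (forall i, 0 <= F i) -> F k <= \big[Rplus/R0]_(i < d) F i.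
Proof.
  intro H. rewrite (bigD1 k) //=. set S := (X in F k + X). have : 0 <= S.
  { rewrite /S; apply: (big_rec (fun a => 0 <= a)); [lra|]. intros i a _ Ha. have := H i. lra. }
  lra.
Qed.

Lemma dot_comm {d} (u v : vec d) : dot u v = dot v u.
Proof. unfold dot. apply eq_bigr => i _; ring. Qed.
Lemma dot_add_r {d} (z u v : vec d) : dot z (vadd u v) = dot z u + dot z v.
Proof. unfold dot, vadd. rewrite -sum_plus. apply eq_bigr => i _; ring. Qed.
Lemma dot_scale_r {d} (z u : vec d) l : dot z (vscale l u) = l * dot z u.
Proof. unfold dot, vscale. rewrite -sum_scal. apply eq_bigr => i _; ring. Qed.
Lemma dot_add_l {d} (z u v : vec d) : dot (vadd u v) z = dot u z + dot v z.
Proof. rewrite !(dot_comm _ z). apply dot_add_r. Qed.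
Lemma dot_scale_l {d} (z u : vec d) l : dot (vscale l u) z = l * dot u z.
Proof. rewrite !(dot_comm _ z). apply dot_scale_r. Qed.
Lemma dot_zero_r {d} (z : vec d) : dot z vzero = 0.
Proof. have := dot_scale_r z vzero 0. have -> : vscale 0 (@vzero d) = vzero.
  { apply vec_ext => i; unfold vscale, vzero; ring. } lra. Qed.
Lemma dot_zero_l {d} (z : vec d) : dot vzero z = 0.
Proof. rewrite dot_comm; apply dot_zero_r. Qed.
Lemma dot_ebas {d} (z : vec d) k : dot z (ebas k) = z k.
Proof.
  unfold dot, ebas. rewrite (bigD1 k) //= eqxx big1 /=; [ring|].
  intros i Hi. rewrite (negbTE Hi); ring.
Qed.
Lemma dot_bound {d} (z w : vec d) : dot z w <= \big[Rplus/R0]_(i < d) (Rabs (z i) * Rabs (w i)).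
Proof.
  eapply Rle_trans; [apply Rle_abs|]. eapply Rle_trans; [apply sum_abs|].
  apply sum_le => i; rewrite Rabs_mult; lra.
Qed.
Lemma dot_self_nonneg {d} (v : vec d) : 0 <= dot v v.
Proof. apply sum_nonneg => i; nra. Qed.
Lemma dot_self_pos {d} (v : vec d) : v <> vzero -> 0 < dot v v.
Proof.
  intro Hv. have [k Hk] : exists k, v k <> 0.
  { apply NNPP; intro N; apply Hv; apply vec_ext => i. apply NNPP; intro C; apply N; exists i; exact C. }
  have := sum_term (fun i => v i * v i) k (fun i => ltac:(nra)). 
  have : 0 < v k * v k by nra. unfold dot. lra.
Qed.

Lemma abs_le_enorm {d} (v : vec d) k : Rabs (v k) <= enorm v.
Proof.
  unfold enorm. rewrite -sqrt_Rsqr_abs. apply sqrt_le_1_alt.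
  unfold Rsqr. apply (sum_term (fun i => v i * v i)) => i; nra.
Qed.
Lemma enorm_nonneg {d} (v : vec d) : 0 <= enorm v.
Proof. apply sqrt_pos. Qed.
Lemma enorm_le_sum1 {d} (v : vec d) : enorm v <= sum1 v.
Proof.
  have H : 0 <= sum1 v /\ dot v v <= sum1 v * sum1 v.
  { unfold dot, sum1. apply: (big_rec2 (fun a b => 0 <= b /\ a <= b * b)); [lra|].
    intros i a b _ [H1 H2]. have := Rabs_pos (v i). have : v i * v i = Rabs (v i) * Rabs (v i).
    { rewrite -Rabs_mult Rabs_right //. apply Rle_ge; nra. } intros. nra. }
  destruct H as [H1 H2]. unfold enorm. rewrite -(sqrt_square (sum1 v)) //. apply sqrt_le_1_alt; auto.
Qed.
Lemma sum1_le_enorm {d} (v : vec d) : sum1 v <= sumc d * enorm v.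
Proof.
  unfold sum1, sumc. rewrite Rmult_comm -sum_scal. apply sum_le => i. have := abs_le_enorm v i. lra.
Qed.
Lemma sumc_nonneg d : 0 <= sumc d.
Proof. apply sum_nonneg => i; lra. Qed.
Lemma sum1_nonneg {d} (v : vec d) : 0 <= sum1 v.
Proof. apply sum_nonneg => i; apply Rabs_pos. Qed.
Lemma enorm_pos {d} (v : vec d) : v <> vzero -> 0 < enorm v.
Proof. intro H; unfold enorm; apply sqrt_lt_R0, dot_self_pos, H. Qed.
Lemma enorm_sq {d} (v : vec d) : dot v v = enorm v * enorm v.
Proof. unfold enorm; rewrite sqrt_sqrt //; apply dot_self_nonneg. Qed.

Lemma vec_decomp {d} (v : vec d) : v = \big[vadd/vzero]_(k < d) vscale (v k) (ebas k).
Proof.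
  apply vec_ext => i.
  rewrite (big_morph (fun u : vec d => u i) (id1 := 0) (op1 := Rplus)) //.
  rewrite (bigD1 i) //= big1 /=.
  - unfold vscale, ebas; rewrite eqxx; ring.
  - intros k Hk. unfold vscale, ebas. have : (i == k) = false. { apply/negbTE. by rewrite eq_sym. }
    move=> ->; ring.
Qed.
Ltac vring := apply vec_ext => ?; unfold vadd, vscale, vzero; ring.

Definition sublin {d} (P : vec d -> R) :=
  (forall l v, 0 <= l -> P (vscale l v) = l * P v) /\ (forall u v, P (vadd u v) <= P u + P v).
Definition lin_along {d} (P : vec d -> R) (e : vec d) (a : R) :=
  forall v s, P (vadd v (vscale s e)) = P v + s * a.
Definition step {d} (P : vec d -> R) (e : vec d) (a : R) : vec d -> R :=
  fun v => infR (fun t => P (vadd v (vscale t e)) - t * a).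

Lemma sublin_zero {d} (P : vec d -> R) : sublin P -> P vzero = 0.
Proof. intros [H _]. have := H 0 vzero (Rle_refl 0). have -> : vscale 0 (@vzero d) = vzero by vring. lra. Qed.

Lemma step_lower {d} (P : vec d -> R) e a : sublin P -> a <= P e -> - P (vscale (-1) e) <= a ->
  forall v t, - P (vscale (-1) v) <= P (vadd v (vscale t e)) - t * a.
Proof.
  intros [Hh Ht] H1 H2 v t.
  have E : vscale t e = vadd (vadd v (vscale t e)) (vscale (-1) v) by vring.
  have T1 := Ht (vadd v (vscale t e)) (vscale (-1) v). rewrite -E in T1.
  have : t * a <= P (vscale t e).
  { destruct (Rle_lt_dec 0 t) as [Hp|Hn].
    - rewrite Hh //. apply Rmult_le_compat_l; lra.
    - have -> : vscale t e = vscale (-t) (vscale (-1) e) by vring.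
      rewrite Hh; [|lra]. nra. }
  lra.
Qed.

Lemma step_le {d} (P : vec d -> R) e a : sublin P -> a <= P e -> - P (vscale (-1) e) <= a ->
  forall v, step P e a v <= P v.
Proof.
  intros HP H1 H2 v. unfold step.
  eapply Rle_trans; [apply (inf_le _ (- P (vscale (-1) v)) 0)|].
  - intro t; apply step_lower; auto.
  - have -> : vadd v (vscale 0 e) = v by vring. lra.
Qed.

Lemma step_lin {d} (P : vec d -> R) e a : sublin P -> a <= P e -> - P (vscale (-1) e) <= a ->
  lin_along (step P e a) e a.
Proof.
  intros HP H1 H2 v s. unfold step. apply Rle_antisym.
  - have : infR (fun t => P (vadd (vadd v (vscale s e)) (vscale t e)) - t * a) - s * a
             <= infR (fun t => P (vadd v (vscale t e)) - t * a); [|lra].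
    apply le_inf => t.
    have := inf_le (fun t => P (vadd (vadd v (vscale s e)) (vscale t e)) - t * a)
              (- P (vscale (-1) (vadd v (vscale s e)))) (t - s) ltac:(intro; apply step_lower; auto).
    have -> : vadd (vadd v (vscale s e)) (vscale (t - s) e) = vadd v (vscale t e) by vring. lra.
  - apply le_inf => t.
    have := inf_le (fun t => P (vadd v (vscale t e)) - t * a) (- P (vscale (-1) v)) (s + t)
              ltac:(intro; apply step_lower; auto).
    have -> : vadd v (vscale (s + t) e) = vadd (vadd v (vscale s e)) (vscale t e) by vring. lra.
Qed.

Lemma step_pres {d} (P : vec d -> R) e a u b : sublin P -> a <= P e -> - P (vscale (-1) e) <= a ->
  lin_along P u b -> lin_along (step P e a) u b.
Proof.
  intros HP H1 H2 Hu v s. unfold step.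
  have E : forall t, P (vadd (vadd v (vscale s u)) (vscale t e)) - t * a
                   = (P (vadd v (vscale t e)) - t * a) + s * b.
  { intro t. have := Hu (vadd v (vscale t e)) s. have -> : vadd (vadd v (vscale t e)) (vscale s u) = vadd (vadd v (vscale s u)) (vscale t e) by vring. lra. }
  have L : forall t, - P (vscale (-1) v) <= P (vadd v (vscale t e)) - t * a by apply step_lower.
  apply Rle_antisym.
  - have : infR (fun t => P (vadd (vadd v (vscale s u)) (vscale t e)) - t * a) - s * b
             <= infR (fun t => P (vadd v (vscale t e)) - t * a); [|lra].
    apply le_inf => t. have := inf_le (fun t => P (vadd (vadd v (vscale s u)) (vscale t e)) - t * a)
              (- P (vscale (-1) (vadd v (vscale s u)))) t ltac:(intro; apply step_lower; auto).
    rewrite E. lra.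
  - apply le_inf => t. rewrite E. have := inf_le _ _ t L. lra.
Qed.

Lemma step_sublin {d} (P : vec d -> R) e a : sublin P -> a <= P e -> - P (vscale (-1) e) <= a ->
  sublin (step P e a).
Proof.
  intros HP H1 H2. have L := step_lower P e a HP H1 H2. have HP' := HP. destruct HP' as [Hh Ht].
  split.
  - intros l v [Hl|Hl].
    + unfold step. apply Rle_antisym.
      * have : / l * infR (fun t => P (vadd (vscale l v) (vscale t e)) - t * a)
                  <= infR (fun t => P (vadd v (vscale t e)) - t * a).
        { apply le_inf => t. have := inf_le (fun t => P (vadd (vscale l v) (vscale t e)) - t * a) _ (l * t) (L _).
          have -> : vadd (vscale l v) (vscale (l * t) e) = vscale l (vadd v (vscale t e)) by vring.
          rewrite Hh; [|lra]. intro Hi. have Hl' : 0 < / l by apply Rinv_0_lt_compat.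
          have := Rmult_le_compat_l (/ l) _ _ (Rlt_le _ _ Hl') Hi.
          have -> : / l * (l * P (vadd v (vscale t e)) - l * t * a) = P (vadd v (vscale t e)) - t * a by field; lra.
          lra. }
        intro Hi. have := Rmult_le_compat_l l _ _ (Rlt_le _ _ Hl) Hi.
        have -> : l * (/ l * infR (fun t => P (vadd (vscale l v) (vscale t e)) - t * a))
           = infR (fun t => P (vadd (vscale l v) (vscale t e)) - t * a) by field; lra. lra.
      * have : l * infR (fun t => P (vadd v (vscale t e)) - t * a)
                  <= infR (fun t => P (vadd (vscale l v) (vscale t e)) - t * a).
        { apply le_inf => t. have := inf_le (fun t => P (vadd v (vscale t e)) - t * a) _ (t / l) (L _).
          have -> : vadd (vscale l v) (vscale t e) = vscale l (vadd v (vscale (t / l) e)) by apply vec_ext => ?; unfold vadd, vscale; field; lra.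
          rewrite Hh; [|lra]. intro Hi. have := Rmult_le_compat_l l _ _ (Rlt_le _ _ Hl) Hi.
          have -> : l * (P (vadd v (vscale (t / l) e)) - t / l * a) = l * P (vadd v (vscale (t / l) e)) - t * a by field; lra.
          lra. }
        lra.
    + subst l. rewrite Rmult_0_l. have -> : vscale 0 v = vzero by vring.
      unfold step. apply Rle_antisym.
      * have := inf_le (fun t => P (vadd vzero (vscale t e)) - t * a) _ 0 (L _).
        have -> : vadd vzero (vscale 0 e) = vzero by vring. rewrite sublin_zero //. lra.
      * apply le_inf => t. have := L vzero t. have -> : vscale (-1) (@vzero d) = vzero by vring.
        rewrite sublin_zero //. lra.
  - intros u v. unfold step.
    set Fu := (fun t => P (vadd u (vscale t e)) - t * a).
    set Fv := (fun t => P (vadd v (vscale t e)) - t * a).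
    set Fuv := (fun t => P (vadd (vadd u v) (vscale t e)) - t * a).
    have K : forall t1 t2, infR Fuv <= Fu t1 + Fv t2.
    { intros t1 t2. have := inf_le Fuv _ (t1 + t2) (L _). unfold Fuv, Fu, Fv.
      have -> : vadd (vadd u v) (vscale (t1 + t2) e) = vadd (vadd u (vscale t1 e)) (vadd v (vscale t2 e)) by vring.
      have := Ht (vadd u (vscale t1 e)) (vadd v (vscale t2 e)). lra. }
    have : infR Fuv - infR Fv <= infR Fu.
    { apply le_inf => t1. have : infR Fuv - Fu t1 <= infR Fv.
      { apply le_inf => t2. have := K t1 t2. lra. } lra. }
    lra.
Qed.

Lemma lin_along_val {d} (P : vec d -> R) e a : sublin P -> lin_along P e a -> P e = a.
Proof. intros HP H. have := H vzero 1. have -> : vadd vzero (vscale 1 e) = e by vring. rewrite sublin_zero //. lra. Qed.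

Lemma iter_steps {d} (l : seq 'I_d) : forall P : vec d -> R, sublin P ->
  exists Q, sublin Q /\ (forall v, Q v <= P v) /\ (forall u b, lin_along P u b -> lin_along Q u b) /\
    (forall k, k \in l -> lin_along Q (ebas k) (Q (ebas k))).
Proof.
  elim: l => [|k l IH] P HP.
  - exists P; split; [exact HP|split; [intros; apply Rle_refl|split; [auto|by []]]].
  - have Hz := sublin_zero P HP. have HP' := HP. destruct HP' as [Hh Ht].
    have C1 : P (ebas k) <= P (ebas k) by lra.
    have C2 : - P (vscale (-1) (ebas k)) <= P (ebas k).
    { have := Ht (ebas k) (vscale (-1) (ebas k)). have -> : vadd (ebas k) (vscale (-1) (ebas k)) = vzero by vring. lra. }
    have HP1 := step_sublin P (ebas k) _ HP C1 C2.
    destruct (IH _ HP1) as [Q [HQ [Hle [Hpres Hk]]]].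
    exists Q; split; [auto|split; [|split]].
    + intro v; eapply Rle_trans; [apply Hle|]. apply step_le; auto.
    + intros u b Hu. apply Hpres, step_pres; auto.
    + intros j. rewrite in_cons => /orP [/eqP ->|Hj]; [|by apply Hk].
      have Hl : lin_along Q (ebas k) (P (ebas k)) by apply Hpres, step_lin.
      rewrite (lin_along_val Q _ _ HQ Hl). exact Hl.
Qed.

Lemma lin_sum {d} (Q : vec d -> R) (v : vec d) (l : seq 'I_d) :
  (forall k, k \in l -> lin_along Q (ebas k) (Q (ebas k))) ->
  forall x, Q (vadd x (\big[vadd/vzero]_(k <- l) vscale (v k) (ebas k)))
      = Q x + \big[Rplus/R0]_(k <- l) (Q (ebas k) * v k).
Proof.
  elim: l => [|k l IH] H x.
  - rewrite !big_nil. have -> : vadd x vzero = x by vring. ring.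
  - rewrite !big_cons.
    have -> : vadd x (vadd (vscale (v k) (ebas k)) (\big[vadd/vzero]_(j <- l) vscale (v j) (ebas j)))
      = vadd (vadd x (\big[vadd/vzero]_(j <- l) vscale (v j) (ebas j))) (vscale (v k) (ebas k)) by vring.
    rewrite H; [|by rewrite in_cons eqxx]. rewrite IH. ring.
    intros j Hj; apply H; by rewrite in_cons Hj orbT.
Qed.

Lemma hahn_banach {d} (N : vec d -> R) : sublin N -> forall w,
  exists a : vec d, (forall v, dot a v <= N v) /\ dot a w = N w.
Proof.
  intros HN w. have Hz := sublin_zero N HN. have HN' := HN. destruct HN' as [Hh Ht].
  have C1 : N w <= N w by lra.
  have C2 : - N (vscale (-1) w) <= N w.
  { have := Ht w (vscale (-1) w). have -> : vadd w (vscale (-1) w) = vzero by vring. lra. }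
  have HP0 := step_sublin N w _ HN C1 C2.
  destruct (iter_steps (index_enum 'I_d) _ HP0) as [Q [HQ [Hle [Hpres Hk]]]].
  have Hw : lin_along Q w (N w) by apply Hpres, step_lin.
  have Hdot : forall v, Q v = dot (fun k => Q (ebas k)) v.
  { intro v. have := lin_sum Q v (index_enum 'I_d) (fun k Hk' => Hk k Hk') vzero.
    rewrite sublin_zero // Rplus_0_l. have -> : vadd vzero (\big[vadd/vzero]_(k <- index_enum 'I_d) vscale (v k) (ebas k)) = v.
    { transitivity (\big[vadd/vzero]_(k <- index_enum 'I_d) vscale (v k) (ebas k)); [vring|]. symmetry; apply vec_decomp. }
    intros ->. reflexivity. }
  exists (fun k => Q (ebas k)). split.
  - intro v. rewrite -Hdot. eapply Rle_trans; [apply Hle|]. apply step_le; auto.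
  - rewrite -Hdot. apply (lin_along_val Q w); auto.
Qed.
Lemma lip_cont (f : R -> R) K : 0 <= K -> (forall s t, Rabs (f s - f t) <= K * Rabs (s - t)) ->
  forall c, continuity_pt f c.
Proof.
  intros HK Hl c. unfold continuity_pt, continue_in, limit1_in, limit_in. simpl.
  intros eps He. exists (eps / (K + 1)). split.
  - apply Rlt_gt, Rdiv_lt_0_compat; lra.
  - intros x [_ Hx]. unfold Rdist in *. have := Hl x c.
    have : K * Rabs (x - c) <= (K + 1) * Rabs (x - c). { have := Rabs_pos (x - c). nra. }
    have : (K + 1) * Rabs (x - c) < eps.
    { have E : eps = (K + 1) * (eps / (K + 1)) by field; lra. rewrite {1}E.
      apply Rmult_lt_compat_l; lra. }
    lra.
Qed.

Lemma pos_inf_1d (f : R -> R) K b : 0 <= K -> (forall s t, Rabs (f s - f t) <= K * Rabs (s - t)) ->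
  (forall t, 0 < f t) -> (forall t, K * Rabs t - b <= f t) -> exists m, 0 < m /\ forall t, m <= f t.
Proof.
  intros [HK|HK] Hl Hp Hg.
  - set R1 := Rabs ((b + 1) / K).
    have HR1 : 0 <= R1 := Rabs_pos _.
    destruct (continuity_ab_min f (- R1) R1 ltac:(lra) (fun c _ => lip_cont f K ltac:(lra) Hl c)) as [mx [Hmx Hb]].
    exists (Rmin 1 (f mx)). split. { apply Rmin_glb_lt; [lra|apply Hp]. }
    intro t. destruct (Rle_lt_dec (Rabs t) R1) as [Ht|Ht].
    + eapply Rle_trans; [apply Rmin_r|]. apply Hmx. split; [|apply Rle_trans with (Rabs t); auto; apply Rle_abs].
      have := Rabs_pos t. have := Rle_abs (- t). rewrite Rabs_Ropp. lra.
    + eapply Rle_trans; [apply Rmin_l|]. have := Hg t.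
      have : (b + 1) <= K * R1. { unfold R1. have E : b + 1 = K * ((b+1)/K) by field; lra.
        rewrite {1}E. apply Rmult_le_compat_l; [lra|apply Rle_abs]. }
      have : K * R1 <= K * Rabs t by apply Rmult_le_compat_l; lra. lra.
  - subst K. exists (f 0). split; [apply Hp|]. intro t. have := Hl t 0. rewrite Rmult_0_l.
    intro H. have := Rabs_pos (f t - f 0). have := Rle_abs (- (f t - f 0)). rewrite Rabs_Ropp. lra.
Qed.

Definition snorm {d} (N : vec d -> R) :=
  sublin N /\ (forall v, N (vscale (-1) v) = N v) /\ (forall v, 0 <= N v).

Lemma snorm_abs {d} (N : vec d -> R) l v : snorm N -> N (vscale l v) = Rabs l * N v.
Proof.
  intros [[Hh _] [Hs _]]. destruct (Rle_lt_dec 0 l) as [H|H].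
  - rewrite Hh // Rabs_right //; lra.
  - have -> : vscale l v = vscale (-l) (vscale (-1) v) by vring. rewrite Hh; [|lra]. rewrite Hs Rabs_left //.
Qed.

Lemma step_snorm {d} (N : vec d -> R) e : snorm N -> snorm (step N e 0).
Proof.
  intros HN. have HN' := HN. destruct HN' as [Hsl [Hs Hn]].
  have C1 : 0 <= N e := Hn e. have C2 : - N (vscale (-1) e) <= 0 by have := Hn (vscale (-1) e); lra.
  have L := step_lower N e 0 Hsl C1 C2.
  split; [apply step_sublin; auto|split].
  - intro v. unfold step. apply Rle_antisym.
    + apply le_inf => t. have := inf_le (fun t => N (vadd (vscale (-1) v) (vscale t e)) - t * 0) _ (- t) (L _).
      have -> : vadd (vscale (-1) v) (vscale (- t) e) = vscale (-1) (vadd v (vscale t e)) by vring. rewrite Hs. lra.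
    + apply le_inf => t. have := inf_le (fun t => N (vadd v (vscale t e)) - t * 0) _ (- t) (L _).
      have -> : vadd v (vscale (- t) e) = vscale (-1) (vadd (vscale (-1) v) (vscale t e)) by vring. rewrite Hs. lra.
  - intro v. unfold step. apply le_inf => t. have := Hn (vadd v (vscale t e)). lra.
Qed.

Lemma ebas_at {d} (j i : 'I_d) : ebas j i = if i == j then 1 else 0.
Proof. reflexivity. Qed.

Lemma lb_list {d} (i : 'I_d) (js : seq 'I_d) : forall N : vec d -> R, snorm N ->
  (forall v, v i <> 0 -> 0 < N v) ->
  exists m, 0 < m /\ forall v, v i = 1 -> (forall k, k != i -> k \notin js -> v k = 0) -> m <= N v.
Proof.
  elim: js => [|j js IH] N HN Hpos.
  - exists (N (ebas i)). split. { apply Hpos. rewrite ebas_at eqxx. lra. }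
    intros v H1 H2. have -> : v = ebas i; [|lra].
    apply vec_ext => k. rewrite ebas_at. case: (eqVneq k i) => [->|Hk]; [exact H1|]. apply H2; auto.
  - case: (eqVneq j i) => [Eji|Hji].
    + destruct (IH N HN Hpos) as [m [Hm Hb]]. exists m; split; auto.
      intros v H1 H2. apply Hb; auto. intros k Hk Hk'. apply H2; auto. rewrite in_cons negb_or Hk' andbT.
      by rewrite Eji.
    + have HN' := HN. destruct HN' as [[Hh Ht] [Hs Hn]].
      have HS := step_snorm N (ebas j) HN.
      have Hpos' : forall v, v i <> 0 -> 0 < step N (ebas j) 0 v.
      { intros v Hv. set f := fun t => N (vadd v (vscale t (ebas j))) - t * 0.
        have Lip : forall s t, Rabs (f s - f t) <= N (ebas j) * Rabs (s - t).
        { intros s t. unfold f. rewrite !Rmult_0_r !Rminus_0_r.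
          have E1 : vadd v (vscale s (ebas j)) = vadd (vadd v (vscale t (ebas j))) (vscale (s - t) (ebas j)) by vring.
          have E2 : vadd v (vscale t (ebas j)) = vadd (vadd v (vscale s (ebas j))) (vscale (t - s) (ebas j)) by vring.
          have T1 := Ht (vadd v (vscale t (ebas j))) (vscale (s - t) (ebas j)). rewrite -E1 snorm_abs // in T1.
          have T2 := Ht (vadd v (vscale s (ebas j))) (vscale (t - s) (ebas j)). rewrite -E2 snorm_abs // in T2.
          rewrite Rabs_minus_sym in T2. apply Rabs_le. lra. }
        have Pf : forall t, 0 < f t.
        { intro t. unfold f. rewrite Rmult_0_r Rminus_0_r. apply Hpos. unfold vadd, vscale. rewrite ebas_at.
          have -> : (i == j) = false by apply/negbTE; rewrite eq_sym. lra. }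
        have Gr : forall t, N (ebas j) * Rabs t - N v <= f t.
        { intro t. unfold f. rewrite Rmult_0_r Rminus_0_r.
          have E : vscale t (ebas j) = vadd (vadd v (vscale t (ebas j))) (vscale (-1) v) by vring.
          have := Ht (vadd v (vscale t (ebas j))) (vscale (-1) v). rewrite -E snorm_abs // Hs. lra. }
        destruct (pos_inf_1d f _ _ (Hn _) Lip Pf Gr) as [m [Hm Hb]].
        have : m <= step N (ebas j) 0 v by apply le_inf. lra. }
      destruct (IH _ HS Hpos') as [m [Hm Hb]]. exists m; split; auto.
      intros v H1 H2. set v' := vadd v (vscale (- v j) (ebas j)).
      have : m <= step N (ebas j) 0 v'.
      { apply Hb.
        - unfold v', vadd, vscale. rewrite ebas_at. have -> : (i == j) = false by apply/negbTE; rewrite eq_sym. lra.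
        - intros k Hk Hk'. unfold v', vadd, vscale. rewrite ebas_at. case: (eqVneq k j) => [->|Hkj]; [lra|].
          rewrite H2 //; [lra|]. by rewrite in_cons negb_or Hkj Hk'. }
      have : step N (ebas j) 0 v' <= N (vadd v' (vscale (v j) (ebas j))) - v j * 0.
      { unfold step. apply (inf_le (fun t => N (vadd v' (vscale t (ebas j))) - t * 0) (- N (vscale (-1) v')) (v j)). intro t; apply step_lower; [apply HN | apply Hn | have := Hn (vscale (-1) (ebas j)); lra]. }
      have -> : vadd v' (vscale (v j) (ebas j)) = v by (unfold v'; vring). lra.
Qed.

Lemma coord_bound {d} (N : vec d -> R) : snorm N -> (forall v, v <> vzero -> 0 < N v) ->
  exists c, 0 < c /\ forall v k, c * Rabs (v k) <= N v.
Proof.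
  intros HN Hpos.
  have One : forall i : 'I_d, exists m, 0 < m /\ forall v, m * Rabs (v i) <= N v.
  { intro i. destruct (lb_list i (enum 'I_d) N HN) as [m [Hm Hb]].
    { intros v Hv. apply Hpos. intro E; apply Hv; rewrite E; reflexivity. }
    exists m; split; auto. intro v. case: (Req_dec (v i) 0) => [E|E].
    - rewrite E Rabs_R0 Rmult_0_r. apply HN.
    - set u := vscale (/ v i) v.
      have Eu : v = vscale (v i) u by apply vec_ext => k; unfold u, vscale; field.
      have EN : N v = Rabs (v i) * N u by rewrite {1}Eu snorm_abs.
      have H1 : u i = 1 by unfold u, vscale; field.
      have H3 := Hb u H1 ltac:(intros k _ Hk; by rewrite mem_enum in Hk).
      rewrite EN.
      have := Rabs_pos (v i). nra. }
  have L : forall l : seq 'I_d, exists c, 0 < c /\ forall k, k \in l -> forall v, c * Rabs (v k) <= N v.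
  { elim => [|k l [c [Hc Hb]]]. { exists 1; split; [lra|by []]. }
    destruct (One k) as [m [Hm Hbm]]. exists (Rmin c m). split; [apply Rmin_glb_lt; auto|].
    intros j; rewrite in_cons => /orP [/eqP ->|Hj] v.
    - eapply Rle_trans; [|apply Hbm]. apply Rmult_le_compat_r; [apply Rabs_pos|apply Rmin_r].
    - eapply Rle_trans; [|apply (Hb j Hj)]. apply Rmult_le_compat_r; [apply Rabs_pos|apply Rmin_l]. }
  destruct (L (enum 'I_d)) as [c [Hc Hb]]. exists c; split; auto. intros v k. apply Hb. by rewrite mem_enum.
Qed.
Definition dualn {d} (M : vec d -> R) (z : vec d) : R :=
  sup (fun y => exists w, w <> vzero /\ y = dot w z / M w).

Lemma Rdiv_le_0_compat a b : 0 <= a -> 0 < b -> 0 <= a / b.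
Proof. apply Rle_mult_inv_pos. Qed.
Lemma Rabs_m1 : Rabs (-1) = 1.
Proof. rewrite Rabs_Ropp Rabs_R1 //. Qed.

Lemma is_lub_ext (E F : R -> Prop) l : is_lub E l -> (forall y, E y <-> F y) -> is_lub F l.
Proof.
  intros [H1 H2] HEF. split.
  - intros y Hy. apply H1, HEF, Hy.
  - intros b Hb. apply H2. intros y Hy. apply Hb, HEF, Hy.
Qed.

Lemma norm_snorm {d} (M : vec d -> R) : is_norm M -> snorm M.
Proof.
  intros [Hn [Hd [Hh Ht]]]. split; [split|split].
  - intros l v Hl. rewrite Hh Rabs_right //; lra.
  - exact Ht.
  - intro v. rewrite Hh Rabs_m1; ring.
  - exact Hn.
Qed.
Lemma norm_pos {d} (M : vec d -> R) v : is_norm M -> v <> vzero -> 0 < M v.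
Proof.
  intros [Hn [Hd _]] Hv. destruct (Hn v) as [H|H]; auto. exfalso; apply Hv, Hd; auto.
Qed.
Lemma norm_zero {d} (M : vec d -> R) : is_norm M -> M vzero = 0.
Proof. intro H. apply sublin_zero, norm_snorm, H. Qed.

Lemma ebas_neq0 {d} (k : 'I_d) : ebas k <> vzero.
Proof. intro E. have := f_equal (fun u => u k) E. unfold ebas, vzero; rewrite eqxx. lra. Qed.

Lemma some_nonzero {d} : (1 <= d)%nat -> exists v : vec d, v <> vzero.
Proof. intro Hd. exists (ebas (Ordinal Hd)). apply ebas_neq0. Qed.

Lemma dual_bound {d} (M : vec d -> R) : is_norm M ->
  exists c, 0 < c /\ forall z w, dot w z <= (sum1 z / c) * M w.
Proof.
  intro HM. destruct (coord_bound M (norm_snorm M HM) (fun v Hv => norm_pos M v HM Hv)) as [c [Hc Hb]].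
  exists c; split; auto. intros z w. eapply Rle_trans; [apply dot_bound|].
  have -> : sum1 z / c * M w = \big[Rplus/R0]_(i < d) ((M w / c) * Rabs (z i)).
  { rewrite sum_scal. unfold sum1. field. lra. }
  apply sum_le => i. apply Rmult_le_compat_r; [apply Rabs_pos|].
  have H := Hb w i. apply (Rmult_le_reg_l c); auto. replace (c * (M w / c)) with (M w) by (field; lra). exact H.
Qed.

Lemma dual_lub {d} (M : vec d -> R) z : (1 <= d)%nat -> is_norm M ->
  is_lub (fun y => exists w, w <> vzero /\ y = dot w z / M w) (dualn M z).
Proof.
  intros Hd HM. apply sup_spec.
  - destruct (dual_bound M HM) as [c [Hc Hb]]. exists (sum1 z / c).
    intros y [w [Hw ->]]. have Hp := norm_pos M w HM Hw. have := Hb z w.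
    intro H. apply (Rmult_le_reg_r (M w)); auto. unfold Rdiv at 1. rewrite Rmult_assoc Rinv_l; lra.
  - destruct (some_nonzero Hd) as [w Hw]. eexists; exists w; split; eauto.
Qed.

Lemma dual_le {d} (M : vec d -> R) z w : (1 <= d)%nat -> is_norm M -> dot w z <= dualn M z * M w.
Proof.
  intros Hd HM. case: (classic (w = vzero)) => [->|Hw].
  - rewrite dot_zero_l norm_zero // Rmult_0_r; lra.
  - have Hp := norm_pos M w HM Hw.
    have := le_lub _ _ (dot w z / M w) (dual_lub M z Hd HM) ltac:(exists w; split; auto).
    intro H. have := Rmult_le_compat_r (M w) _ _ (Rlt_le _ _ Hp) H.
    unfold Rdiv; rewrite Rmult_assoc Rinv_l; lra.
Qed.

Lemma dualn_pos {d} (M : vec d -> R) z : (1 <= d)%nat -> is_norm M -> z <> vzero -> 0 < dualn M z.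
Proof.
  intros Hd HM Hz. have := le_lub _ _ (dot z z / M z) (dual_lub M z Hd HM) ltac:(exists z; split; auto).
  have : 0 < dot z z / M z by apply Rdiv_lt_0_compat; [apply dot_self_pos|apply norm_pos]. lra.
Qed.
Lemma dualn_nonneg {d} (M : vec d -> R) z : (1 <= d)%nat -> is_norm M -> 0 <= dualn M z.
Proof.
  intros Hd HM. destruct (some_nonzero Hd) as [w Hw].
  have := le_lub _ _ (dot w z / M w) (dual_lub M z Hd HM) ltac:(exists w; split; auto).
  have := dual_le M z (vscale (-1) w) Hd HM. have := norm_pos M w HM Hw.
  rewrite (proj1 (proj2 (proj2 HM))) dot_scale_l Rabs_m1 Rmult_1_l. intros Hp H1 H2.
  destruct (Rle_lt_dec 0 (dot w z)) as [Hdz|Hdz].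
  - have : 0 <= dot w z / M w by apply Rdiv_le_0_compat; lra. lra.
  - nra.
Qed.

Lemma dualn_norm {d} (M : vec d -> R) : (1 <= d)%nat -> is_norm M -> is_norm (dualn M).
Proof.
  intros Hd HM. have HM' := HM. destruct HM' as [Hn [Hdef [Hh Ht]]].
  split; [|split; [|split]].
  - intro; apply dualn_nonneg; auto.
  - intros z Hz. apply NNPP; intro C. have := dualn_pos M z Hd HM C. lra.
  - intros l z. apply sup_eq. apply is_lub_intro.
    + intros y [w [Hw ->]]. have Hp := norm_pos M w HM Hw.
      have := dual_le M z (vscale l w) Hd HM. rewrite dot_scale_l Hh dot_scale_r. intro H.
      apply (Rmult_le_reg_r (M w)); auto. unfold Rdiv; rewrite Rmult_assoc Rinv_l; [|lra]. lra.
    + intros eps He. case: (Req_dec l 0) => [El|El].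
      * subst l. destruct (some_nonzero Hd) as [w Hw]. exists 0. split.
        { exists w; split; auto. rewrite dot_scale_r Rmult_0_l /Rdiv Rmult_0_l //. }
        rewrite Rabs_R0 Rmult_0_l. lra.
      * have Hal : 0 < Rabs l by apply Rabs_pos_lt.
        destruct (lub_approx _ _ (eps / Rabs l) (dual_lub M z Hd HM)) as [y [[w [Hw ->]] Hy]].
        { apply Rdiv_lt_0_compat; lra. }
        exists (dot (vscale (/ l) w) (vscale l z) / M (vscale (/ l) w)). split.
        { exists (vscale (/ l) w); split; auto. intro E. apply Hw.
          have -> : w = vscale l (vscale (/ l) w) by apply vec_ext => i; unfold vscale; field.
          rewrite E. vring. }
        rewrite dot_scale_l dot_scale_r Hh Rabs_inv.
        have Hp := norm_pos M w HM Hw.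
        have -> : / l * (l * dot w z) / (/ Rabs l * M w) = Rabs l * (dot w z / M w) by field; split; lra.
        have := Rmult_lt_compat_l (Rabs l) _ _ Hal Hy.
        have -> : Rabs l * (dualn M z - eps / Rabs l) = Rabs l * dualn M z - eps by field; lra. lra.
  - intros u v. apply (lub_le _ _ _ (dual_lub M (vadd u v) Hd HM)). intros y [w [Hw ->]].
    rewrite dot_add_r. have Hp := norm_pos M w HM Hw.
    have := le_lub _ _ (dot w u / M w) (dual_lub M u Hd HM) ltac:(exists w; split; auto).
    have := le_lub _ _ (dot w v / M w) (dual_lub M v Hd HM) ltac:(exists w; split; auto).
    unfold Rdiv. rewrite Rmult_plus_distr_r. lra.
Qed.

Lemma conj_pow r s : 1 < r -> 0 < s ->
  rpow (rpow s (conj_exp r - 1)) r = rpow s (conj_exp r) /\ rpow s (conj_exp r - 1) * s = rpow s (conj_exp r).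
Proof.
  intros Hr Hs. split.
  - rewrite rpow_rpow; [|lra]. f_equal. unfold conj_exp; field; lra.
  - have E : rpow s (conj_exp r) = rpow s ((conj_exp r - 1) + 1) by f_equal; ring.
    rewrite E rpow_plus // rpow_1 //; lra.
Qed.

Lemma legendre_dual {d} (M : vec d -> R) r z : (1 <= d)%nat -> is_norm M -> 1 < r ->
  is_lub (fun y => exists w, y = dot z w - rpow (M w) r / r) (rpow (dualn M z) (conj_exp r) / conj_exp r).
Proof.
  intros Hd HM Hr. have Hs := dualn_nonneg M z Hd HM. set s := dualn M z.
  have Hr' := conj_exp_gt1 r Hr. have Hi := conj_exp_inv r Hr.
  apply is_lub_intro.
  - intros y [w ->]. rewrite dot_comm. have := dual_le M z w Hd HM.
    have := young (M w) s r Hr (proj1 HM w) Hs. fold s. intros. unfold Rdiv in *. lra.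
  - intros eps He. destruct Hs as [Hs|Hs].
    + set sg := rpow s (conj_exp r - 1). have Hsg : 0 < sg by apply rpow_pos.
      destruct (conj_pow r s Hr Hs) as [E1 E2]. fold sg in E1, E2.
      destruct (lub_approx _ _ (eps / sg) (dual_lub M z Hd HM)) as [y [[w [Hw ->]] Hy]].
      { apply Rdiv_lt_0_compat; lra. }
      have Hp := norm_pos M w HM Hw. fold s in Hy.
      exists (dot z (vscale (sg / M w) w) - rpow (M (vscale (sg / M w) w)) r / r). split; [eexists; eauto|].
      rewrite (proj1 (proj2 (proj2 HM))) dot_scale_r Rabs_right; [|apply Rle_ge, Rdiv_le_0_compat; lra].
      have -> : sg / M w * M w = sg by field; lra. rewrite E1.
      have : sg * (s - eps / sg) < sg * (dot w z / M w) by apply Rmult_lt_compat_l.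
      have -> : sg * (s - eps / sg) = sg * s - eps by field; lra.
      rewrite (dot_comm z w). have -> : sg / M w * dot w z = sg * (dot w z / M w) by field; lra.
      have : rpow s (conj_exp r) / conj_exp r = rpow s (conj_exp r) - rpow s (conj_exp r) / r.
      { unfold Rdiv. have := Hi. intro. 
        replace (rpow s (conj_exp r) * / conj_exp r) with (rpow s (conj_exp r) * (1 - / r)) by (f_equal; lra). ring. }
      rewrite Rmult_comm in E2. lra.
    + rewrite /s -Hs rpow_0. exists 0. split; [|unfold Rdiv; lra].
      exists vzero. rewrite dot_zero_r norm_zero // rpow_0. unfold Rdiv; ring.
Qed.

Lemma bidual {d} (M : vec d -> R) w : (1 <= d)%nat -> is_norm M ->
  is_lub (fun y => exists z, z <> vzero /\ y = dot z w / dualn M z) (M w).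
Proof.
  intros Hd HM. apply is_lub_intro.
  - intros y [z [Hz ->]]. have Hp := dualn_pos M z Hd HM Hz. rewrite dot_comm.
    have := dual_le M z w Hd HM. intro H. apply (Rmult_le_reg_r (dualn M z)); auto.
    unfold Rdiv; rewrite Rmult_assoc Rinv_l; lra.
  - intros eps He. case: (classic (w = vzero)) => [->|Hw].
    + destruct (some_nonzero Hd) as [z Hz]. exists 0. split; [|rewrite norm_zero //; lra].
      exists z; split; auto. rewrite dot_zero_r /Rdiv Rmult_0_l //.
    + have Hp := norm_pos M w HM Hw.
      destruct (hahn_banach M (proj1 (norm_snorm M HM)) w) as [a [Ha1 Ha2]].
      have Ha0 : a <> vzero. { intro E; rewrite E dot_zero_l in Ha2. lra. }
      have Hda := dualn_pos M a Hd HM Ha0.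
      have Hda1 : dualn M a <= 1.
      { apply (lub_le _ _ _ (dual_lub M a Hd HM)). intros y [v [Hv ->]]. have := norm_pos M v HM Hv.
        rewrite dot_comm. intro Hv'. have := Ha1 v. intro H. apply (Rmult_le_reg_r (M v)); auto.
        unfold Rdiv; rewrite Rmult_assoc Rinv_l; lra. }
      exists (dot a w / dualn M a). split; [exists a; split; auto|].
      rewrite Ha2. have : M w <= M w / dualn M a.
      { apply (Rmult_le_reg_r (dualn M a)); auto. unfold Rdiv; rewrite Rmult_assoc Rinv_l; [|lra]. nra. }
      lra.
Qed.
Lemma rpow_inv_base x a : 0 < x -> rpow (/ x) a = / rpow x a.
Proof.
  intro H. rewrite !rpow_gt0 //; [|apply Rinv_0_lt_compat; lra].
  unfold Rpower. rewrite ln_Rinv // -exp_Ropp. f_equal; ring.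
Qed.

Lemma pow_norm {d} (F : vec d -> R) r : 0 < r -> (forall w, 0 <= F w) -> convex_vec F ->
  (forall l w, F (vscale l w) = rpow (Rabs l) r * F w) -> (forall w, w <> vzero -> 0 < F w) ->
  is_norm (fun w => rpow (F w) (1 / r)).
Proof.
  intros Hr Hn Hc Hh Hp.
  have Fz : F vzero = 0. { have := Hh 0 vzero. have -> : vscale 0 (@vzero d) = vzero by vring.
    rewrite Rabs_R0 rpow_0. lra. }
  have Back : forall w, rpow (rpow (F w) (1 / r)) r = F w.
  { intro w. rewrite rpow_rpow // . have -> : 1 / r * r = 1 by field; lra. apply rpow_1, Hn. }
  split; [|split; [|split]].
  - intro; apply rpow_nonneg.
  - intros w Hw. apply NNPP; intro C. have := Hp w C. have := rpow_eq0 _ _ (Hn w) Hw. lra.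
  - intros l w. rewrite Hh rpow_mult; [|apply rpow_nonneg|apply Hn]. rewrite rpow_rpow; [|apply Rabs_pos].
    have -> : r * (1 / r) = 1 by field; lra. rewrite rpow_1 //. apply Rabs_pos.
  - intros u v. case: (classic (u = vzero)) => [->|Hu].
    { have -> : vadd vzero v = v by vring. rewrite Fz rpow_0. lra. }
    case: (classic (v = vzero)) => [->|Hv].
    { have -> : vadd u vzero = u by vring. rewrite Fz rpow_0. lra. }
    set a := rpow (F u) (1 / r). set b := rpow (F v) (1 / r).
    have Ha : 0 < a by apply rpow_pos, Hp. have Hb : 0 < b by apply rpow_pos, Hp.
    have Fu : F u = rpow a r by rewrite /a Back. have Fv : F v = rpow b r by rewrite /b Back.
    have Nu : F (vscale (/ a) u) = 1.
    { rewrite Hh Rabs_right; [|apply Rle_ge; left; apply Rinv_0_lt_compat; lra].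
      rewrite rpow_inv_base // Fu. field. apply Rgt_not_eq, rpow_pos; lra. }
    have Nv : F (vscale (/ b) v) = 1.
    { rewrite Hh Rabs_right; [|apply Rle_ge; left; apply Rinv_0_lt_compat; lra].
      rewrite rpow_inv_base // Fv. field. apply Rgt_not_eq, rpow_pos; lra. }
    set t := a / (a + b).
    have Ht : 0 <= t <= 1. { unfold t; split; [apply Rdiv_le_0_compat; lra|].
      apply (Rmult_le_reg_r (a + b)); [lra|]. unfold Rdiv; rewrite Rmult_assoc Rinv_l; lra. }
    have E : vadd u v = vscale (a + b) (vadd (vscale t (vscale (/ a) u)) (vscale (1 - t) (vscale (/ b) v))).
    { apply vec_ext => i; unfold vadd, vscale, t. field. lra. }
    have C := Hc (vscale (/ a) u) (vscale (/ b) v) t Ht. rewrite Nu Nv in C.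
    rewrite E Hh Rabs_right; [|lra].
    apply Rle_trans with (rpow (rpow (a + b) r * 1) (1 / r)). { apply rpow_le; [apply Rdiv_lt_0_compat; lra|]. split.
      - apply Rmult_le_pos; [apply rpow_nonneg|apply Hn].
      - apply Rmult_le_compat_l; [apply rpow_nonneg|]. lra. }
    rewrite Rmult_1_r rpow_rpow; [|lra]. have -> : r * (1 / r) = 1 by field; lra. rewrite rpow_1; lra.
Qed.

Lemma adm_zero {d} p (phi : R -> vec d -> R) rho : admissible p phi -> 0 < rho -> phi rho vzero = 0.
Proof.
  intros [_ [_ [Hh _]]] Hr. have := Hh rho 0 vzero Hr. have -> : vscale 0 (@vzero d) = vzero by vring.
  rewrite Rabs_R0 rpow_0. lra.
Qed.

Lemma adm_convex_w {d} p (phi : R -> vec d -> R) rho : admissible p phi -> 0 < rho -> convex_vec (phi rho).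
Proof.
  intros [_ [Hc _]] Hr u v t Ht. have := Hc rho rho u v t Hr Hr Ht.
  have -> : t * rho + (1 - t) * rho = rho by ring. auto.
Qed.

Lemma adm_scale {d} p (phi : R -> vec d -> R) x y t w : admissible p phi -> 0 < x -> 0 < y ->
  0 < t < 1 -> 0 < (y - t * x) / (1 - t) -> phi y w <= rpow t (1 - p) * phi x w.
Proof.
  intros HA Hx Hy Ht Hs. have HA' := HA. destruct HA' as [Hn [Hc [Hh _]]].
  set sg := (y - t * x) / (1 - t).
  have := Hc x sg (vscale (/ t) w) vzero t Hx Hs ltac:(lra).
  have -> : t * x + (1 - t) * sg = y by unfold sg; field; lra.
  have -> : vadd (vscale t (vscale (/ t) w)) (vscale (1 - t) vzero) = w.
  { apply vec_ext => i; unfold vadd, vscale, vzero. field. lra. }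
  rewrite (adm_zero p) // Rmult_0_r Rplus_0_r Hh // Rabs_right; [|apply Rle_ge; left; apply Rinv_0_lt_compat; lra].
  rewrite rpow_inv_base; [|lra].
  have -> : rpow t (1 - p) = t * / rpow t p.
  { have -> : 1 - p = 1 + - p by ring. rewrite rpow_plus; [|lra]. rewrite rpow_opp; [|lra]. rewrite rpow_1; lra. }
  lra.
Qed.

Lemma le_of_scales A B : 0 <= A -> (forall s, 1 < s -> B <= s * A) -> B <= A.
Proof.
  intros HA H. apply Rnot_lt_le; intro C.
  set s := 1 + (B - A) / (2 * (A + 1)).
  have Hs : 1 < s. { unfold s. have : 0 < (B - A) / (2 * (A + 1)) by apply Rdiv_lt_0_compat; lra. lra. }
  have := H s Hs. unfold s.
  have : (B - A) / (2 * (A + 1)) * A < B - A.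
  { have -> : (B - A) / (2 * (A + 1)) * A = (B - A) * (A / (2 * (A + 1))) by field; lra.
    have : A / (2 * (A + 1)) < 1. { apply (Rmult_lt_reg_r (2 * (A + 1))); [lra|].
      unfold Rdiv; rewrite Rmult_assoc Rinv_l; lra. }
    have : 0 <= A / (2 * (A + 1)) by apply Rdiv_le_0_compat; lra. nra. }
  nra.
Qed.

Lemma adm_nonincr {d} p (phi : R -> vec d -> R) x y w : 1 < p -> admissible p phi -> 0 < x -> x <= y ->
  phi y w <= phi x w.
Proof.
  intros Hp HA Hx Hxy. apply le_of_scales. { apply (proj1 HA); lra. }
  intros s Hs. set t := rpow s (/ (1 - p)).
  have Ht0 : 0 < t by apply rpow_pos; lra.
  have Ht1 : t < 1.
  { unfold t. rewrite rpow_gt0; [|lra]. apply Rlt_le_trans with (Rpower s 0); [|rewrite Rpower_O; lra].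
    apply Rpower_lt; auto. apply Rinv_lt_0_compat; lra. }
  have := adm_scale p phi x y t w HA Hx ltac:(lra) ltac:(lra) ltac:(apply Rdiv_lt_0_compat; nra).
  have -> : rpow t (1 - p) = s; [|lra].
  unfold t. rewrite rpow_rpow; [|lra]. have -> : / (1 - p) * (1 - p) = 1 by field; lra. apply rpow_1; lra.
Qed.

Lemma adm_pos {d} p (phi : R -> vec d -> R) rho w : 1 < p -> admissible p phi -> 0 < rho -> w <> vzero ->
  0 < phi rho w.
Proof.
  intros Hp HA Hr Hw. have HA' := HA. destruct HA' as [Hn [_ [_ [r0 [Hr0 Hpos]]]]].
  destruct (Rle_lt_dec rho r0) as [Hle|Hlt].
  - have := adm_nonincr p phi rho r0 w Hp HA Hr Hle. have := Hpos w Hw. lra.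
  - destruct (Hn rho w Hr) as [H|H]; auto. exfalso.
    set t := r0 / (2 * rho).
    have Ht : 0 < t < 1. { unfold t; split; [apply Rdiv_lt_0_compat; lra|].
      apply (Rmult_lt_reg_r (2 * rho)); [lra|]. unfold Rdiv; rewrite Rmult_assoc Rinv_l; lra. }
    have Hs : 0 < (r0 - t * rho) / (1 - t).
    { apply Rdiv_lt_0_compat; [|lra]. unfold t. have -> : r0 / (2 * rho) * rho = r0 / 2 by field; lra. lra. }
    have := adm_scale p phi rho r0 t w HA Hr Hr0 Ht Hs. rewrite -H Rmult_0_r. have := Hpos w Hw. lra.
Qed.

Lemma adm_norm {d} p (phi : R -> vec d -> R) rho : 1 < p -> admissible p phi -> 0 < rho ->
  is_norm (fun w => rpow (phi rho w) (1 / p)).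
Proof.
  intros Hp HA Hr. apply pow_norm; [lra| |apply (adm_convex_w p); auto| |].
  - intro w; apply (proj1 HA); auto.
  - intros l w; apply (proj1 (proj2 (proj2 HA))); auto.
  - intros w Hw; apply (adm_pos p); auto.
Qed.

Lemma pow_back x r : 0 <= x -> 0 < r -> rpow (rpow x (1 / r)) r = x.
Proof. intros Hx Hr. rewrite rpow_rpow //. have -> : 1 / r * r = 1 by field; lra. apply rpow_1, Hx. Qed.
Lemma sumc_pos d : (1 <= d)%nat -> 0 < sumc d.
Proof.
  intro Hd. have := sum_term (fun _ : 'I_d => 1) (Ordinal Hd) (fun _ => ltac:(lra)). unfold sumc. lra.
Qed.

Lemma norm_sum_le {d} (M : vec d -> R) (w : vec d) (l : seq 'I_d) : is_norm M ->
  M (\big[vadd/vzero]_(k <- l) vscale (w k) (ebas k)) <= \big[Rplus/R0]_(k <- l) (Rabs (w k) * M (ebas k)).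
Proof.
  intro HM. elim: l => [|k l IH]. { rewrite !big_nil norm_zero //; lra. }
  rewrite !big_cons. eapply Rle_trans; [apply (proj2 (proj2 (proj2 HM)))|].
  rewrite (proj1 (proj2 (proj2 HM))). lra.
Qed.

Lemma norm_upper {d} (M : vec d -> R) : (1 <= d)%nat -> is_norm M -> exists L, 0 < L /\ forall w, M w <= L * enorm w.
Proof.
  intros Hd HM. set Lm := \big[Rplus/R0]_(k < d) M (ebas k).
  have HLm : 0 <= Lm by apply sum_nonneg => k; apply HM.
  exists (Lm * sumc d + 1). split. { have := sumc_nonneg d. nra. }
  intro w. rewrite {1}(vec_decomp w). eapply Rle_trans; [apply norm_sum_le; auto|].
  apply Rle_trans with (Lm * sum1 w).
  { unfold sum1. rewrite -sum_scal. apply sum_le => i. rewrite Rmult_comm. apply Rmult_le_compat_r; [apply Rabs_pos|].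
    apply (sum_term (fun k => M (ebas k))) => k; apply HM. }
  have := sum1_le_enorm w. have := enorm_nonneg w. nra.
Qed.

Lemma norm_lower {d} (M : vec d -> R) : (1 <= d)%nat -> is_norm M -> exists c, 0 < c /\ forall w, c * enorm w <= M w.
Proof.
  intros Hd HM. destruct (coord_bound M (norm_snorm M HM) (fun v Hv => norm_pos M v HM Hv)) as [c [Hc Hb]].
  have Hs := sumc_pos d Hd.
  exists (c / sumc d). split; [apply Rdiv_lt_0_compat; lra|]. intro w.
  have : c * sum1 w <= sumc d * M w.
  { unfold sum1, sumc. rewrite -sum_scal Rmult_comm -sum_scal. apply sum_le => i. have := Hb w i. lra. }
  have := enorm_le_sum1 w. intros H1 H2. apply (Rmult_le_reg_l (sumc d)); auto.
  have -> : sumc d * (c / sumc d * enorm w) = c * enorm w by field; lra. nra.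
Qed.

Lemma dual_upper {d} (M : vec d -> R) : (1 <= d)%nat -> is_norm M -> exists K, 0 < K /\ forall z, dualn M z <= K * enorm z.
Proof.
  intros Hd HM. destruct (dual_bound M HM) as [c [Hc Hb]]. have Hs := sumc_pos d Hd.
  exists (sumc d / c). split; [apply Rdiv_lt_0_compat; lra|]. intro z.
  apply (lub_le _ _ _ (dual_lub M z Hd HM)). intros y [w [Hw ->]]. have Hp := norm_pos M w HM Hw.
  have := Hb z w. have := sum1_le_enorm z. intros H1 H2.
  apply (Rmult_le_reg_r (M w)); auto. unfold Rdiv at 1; rewrite Rmult_assoc Rinv_l; [|lra].
  rewrite Rmult_1_r. apply (Rle_trans _ _ _ H2). apply Rmult_le_compat_r; [lra|].
  have := Rinv_0_lt_compat c Hc. unfold Rdiv. nra.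
Qed.

Lemma dual_lower {d} (M : vec d -> R) : (1 <= d)%nat -> is_norm M -> exists k, 0 < k /\ forall z, k * enorm z <= dualn M z.
Proof.
  intros Hd HM. destruct (norm_upper M Hd HM) as [L [HL Hb]].
  exists (/ L). split; [apply Rinv_0_lt_compat; lra|]. intro z.
  case: (classic (z = vzero)) => [->|Hz].
  { have -> : enorm (@vzero d) = 0. { unfold enorm. rewrite dot_zero_l sqrt_0 //. }
    rewrite Rmult_0_r. apply dualn_nonneg; auto. }
  have He := enorm_pos z Hz. have := dual_le M z z Hd HM. rewrite enorm_sq. have := Hb z.
  have := dualn_nonneg M z Hd HM. intros H0 H1 H2.
  have : enorm z * enorm z <= dualn M z * (L * enorm z). { apply (Rle_trans _ _ _ H2). apply Rmult_le_compat_l; lra. }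
  intro H3. have : enorm z <= dualn M z * L by nra.
  intro H4. apply (Rmult_le_reg_l L); auto. have -> : L * (/ L * enorm z) = enorm z by field; lra. lra.
Qed.

Lemma enorm_zero {d} : enorm (@vzero d) = 0.
Proof. unfold enorm. rewrite dot_zero_l sqrt_0 //. Qed.
Lemma rpow_bound_up x L e r : 0 < r -> 0 <= x -> 0 <= L -> 0 <= e -> x <= L * e -> rpow x r <= rpow L r * rpow e r.
Proof. intros. rewrite -rpow_mult //. apply rpow_le; auto. Qed.
Lemma rpow_bound_lo x c e r : 0 < r -> 0 <= c -> 0 <= e -> c * e <= x -> rpow c r * rpow e r <= rpow x r.
Proof. intros. rewrite -rpow_mult //. apply rpow_le; auto. split; auto. apply Rmult_le_pos; auto. Qed.

Definition Nrho {d} p (phi : R -> vec d -> R) rho : vec d -> R := fun w => rpow (phi rho w) (1 / p).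

Lemma ptilde_core {d} p (phi : R -> vec d -> R) rho z : (1 <= d)%nat -> 1 < p -> admissible p phi -> 0 < rho ->
  is_lub (legendre_set p phi rho z) (ptilde p phi rho z / conj_exp p) /\
  ptilde p phi rho z = rpow (dualn (Nrho p phi rho) z) (conj_exp p).
Proof.
  intros Hd Hp HA Hr. have HN := adm_norm p phi rho Hp HA Hr.
  have L := legendre_dual (Nrho p phi rho) p z Hd HN Hp.
  have L' : is_lub (legendre_set p phi rho z) (rpow (dualn (Nrho p phi rho) z) (conj_exp p) / conj_exp p).
  { apply (is_lub_ext _ _ _ L). intro y. unfold legendre_set, Nrho. split; intros [w ->]; exists w;
    rewrite pow_back //; try lra; apply (proj1 HA); auto. }
  have Hq := conj_exp_gt1 p Hp.
  have E : ptilde p phi rho z = rpow (dualn (Nrho p phi rho) z) (conj_exp p).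
  { unfold ptilde. rewrite (sup_eq _ _ L'). field. lra. }
  split; auto. rewrite E. exact L'.
Qed.

Lemma tphi_root {d} p (phi : R -> vec d -> R) rho z : (1 <= d)%nat -> 1 < p -> admissible p phi -> 0 < rho ->
  rpow (ptilde p phi rho z) (1 / conj_exp p) = dualn (Nrho p phi rho) z.
Proof.
  intros Hd Hp HA Hr. rewrite (proj2 (ptilde_core p phi rho z Hd Hp HA Hr)).
  have Hq := conj_exp_gt1 p Hp.
  rewrite rpow_rpow; [|apply dualn_nonneg; auto; apply adm_norm; auto].
  have -> : conj_exp p * (1 / conj_exp p) = 1 by field; lra.
  apply rpow_1, dualn_nonneg; auto; apply adm_norm; auto.
Qed.

Lemma part1 {d} p (phi : R -> vec d -> R) rho : (1 <= d)%nat -> 1 < p -> admissible p phi -> 0 < rho ->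
       is_norm (fun w => rpow (phi rho w) (1 / p)) /\
       is_norm (fun z => rpow (ptilde p phi rho z) (1 / conj_exp p)) /\
       (forall z, is_lub (fun y => exists w : vec d, w <> vzero /\
                            y = dot w z / rpow (phi rho w) (1 / p))
                         (rpow (ptilde p phi rho z) (1 / conj_exp p))) /\
       (forall w, is_lub (fun y => exists z : vec d, z <> vzero /\
                            y = dot w z / rpow (ptilde p phi rho z) (1 / conj_exp p))
                         (rpow (phi rho w) (1 / p))) /\
       (forall l z, ptilde p phi rho (vscale l z) = rpow (Rabs l) (conj_exp p) * ptilde p phi rho z).
Proof.
  intros Hd Hp HA Hr. have HN := adm_norm p phi rho Hp HA Hr. fold (Nrho p phi rho) in HN.
  have Eq := fun z => tphi_root p phi rho z Hd Hp HA Hr.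
  split; [exact HN|split; [|split; [|split]]].
  - have -> : (fun z => rpow (ptilde p phi rho z) (1 / conj_exp p)) = dualn (Nrho p phi rho).
    { apply functional_extensionality => z; apply Eq. }
    apply dualn_norm; auto.
  - intro z. rewrite Eq. exact (dual_lub _ z Hd HN).
  - intro w. apply (is_lub_ext _ _ _ (bidual _ w Hd HN)). intro y.
    split; intros [z [Hz ->]]; exists z; split; auto; rewrite Eq dot_comm //.
  - intros l z. rewrite !(proj2 (ptilde_core p phi _ _ Hd Hp HA Hr)).
    rewrite (proj1 (proj2 (proj2 (dualn_norm _ Hd HN)))). rewrite rpow_mult //.
    apply Rabs_pos. apply dualn_nonneg; auto.
Qed.

Lemma lt_eps_le a b : (forall eps, 0 < eps -> a <= b + eps) -> a <= b.
Proof. intro H. apply Rnot_lt_le; intro C. have := H ((a - b)/2) ltac:(lra). lra. Qed.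

Lemma tphi_concave {d} p (phi : R -> vec d -> R) z : (1 <= d)%nat -> 1 < p -> admissible p phi ->
  concave_pos (fun rho => ptilde p phi rho z).
Proof.
  intros Hd Hp HA x y t Hx Hy Ht. simpl.
  have Hm : 0 < t * x + (1 - t) * y by nra.
  set m := t * x + (1 - t) * y.
  have Lx := proj1 (ptilde_core p phi x z Hd Hp HA Hx).
  have Ly := proj1 (ptilde_core p phi y z Hd Hp HA Hy).
  have Lm := proj1 (ptilde_core p phi m z Hd Hp HA Hm).
  set q := conj_exp p. have Hq := conj_exp_gt1 p Hp.
  set X := ptilde p phi x z / q. set Y := ptilde p phi y z / q. set Mm := ptilde p phi m z / q.
  have key : t * X + (1 - t) * Y <= Mm.
  { apply lt_eps_le => eps He.
    destruct (lub_approx _ _ eps Lx He) as [v1 [[w1 ->] H1]].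
    destruct (lub_approx _ _ eps Ly He) as [v2 [[w2 ->] H2]].
    have H1' : X - eps < dot z w1 - phi x w1 / p := H1.
    have H2' : Y - eps < dot z w2 - phi y w2 / p := H2. clear H1 H2.
    set wm := vadd (vscale t w1) (vscale (1 - t) w2).
    have C := proj1 (proj2 HA) x y w1 w2 t Hx Hy Ht. fold m wm in C.
    have : dot z wm - phi m wm / p <= Mm by apply (le_lub _ _ _ Lm); exists wm.
    have Ed : dot z wm = t * dot z w1 + (1 - t) * dot z w2 by rewrite /wm dot_add_r !dot_scale_r.
    have Cp : phi m wm / p <= t * (phi x w1 / p) + (1 - t) * (phi y w2 / p).
    { have -> : t * (phi x w1 / p) + (1 - t) * (phi y w2 / p) = (t * phi x w1 + (1 - t) * phi y w2) / p by field; lra.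
      unfold Rdiv. apply Rmult_le_compat_r; [left; apply Rinv_0_lt_compat; lra|exact C]. }
    have : t * (X - eps) + (1 - t) * (Y - eps) <= t * (dot z w1 - phi x w1 / p) + (1 - t) * (dot z w2 - phi y w2 / p).
    { apply Rplus_le_compat; apply Rmult_le_compat_l; lra. }
    intros. nra. }
  have EX : ptilde p phi x z = q * X by unfold X, q; field; lra.
  have EY : ptilde p phi y z = q * Y by unfold Y, q; field; lra.
  have EM : ptilde p phi m z = q * Mm by unfold Mm, q; field; lra.
  rewrite EX EY EM. have := Rmult_le_compat_l q _ _ ltac:(unfold q; lra) key. lra.
Qed.

Lemma tphi_nondecr {d} p (phi : R -> vec d -> R) z : (1 <= d)%nat -> 1 < p -> admissible p phi ->
  nondecr_pos (fun rho => ptilde p phi rho z).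
Proof.
  intros Hd Hp HA x y Hx Hxy. simpl.
  have Lx := proj1 (ptilde_core p phi x z Hd Hp HA Hx).
  have Ly := proj1 (ptilde_core p phi y z Hd Hp HA ltac:(lra)).
  have Hq := conj_exp_gt1 p Hp.
  have : ptilde p phi x z / conj_exp p <= ptilde p phi y z / conj_exp p.
  { apply (lub_le _ _ _ Lx). intros v [w ->]. apply Rle_trans with (dot z w - phi y w / p).
    - have := adm_nonincr p phi x y w Hp HA Hx Hxy. intro H.
      have : phi y w / p <= phi x w / p by unfold Rdiv; apply Rmult_le_compat_r; [left; apply Rinv_0_lt_compat; lra|]. lra.
    - apply (le_lub _ _ _ Ly). exists w; reflexivity. }
  intro H. have := Rmult_le_compat_l (conj_exp p) _ _ ltac:(lra) H.
  have -> : conj_exp p * (ptilde p phi x z / conj_exp p) = ptilde p phi x z by field; lra.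
  have -> : conj_exp p * (ptilde p phi y z / conj_exp p) = ptilde p phi y z by field; lra. auto.
Qed.

Lemma tphi_nonneg {d} p (phi : R -> vec d -> R) rho z : (1 <= d)%nat -> 1 < p -> admissible p phi -> 0 < rho ->
  0 <= ptilde p phi rho z.
Proof. intros. rewrite (proj2 (ptilde_core p phi rho z _ _ _ _)) //. apply rpow_nonneg. Qed.

Lemma tphi_lin {d} p (phi : R -> vec d -> R) rho z : (1 <= d)%nat -> 1 < p -> admissible p phi -> 0 < rho ->
  ptilde p phi rho z <= (1 + 2 * rho) * ptilde p phi 1 z.
Proof.
  intros Hd Hp HA Hr. have H1 := tphi_nonneg p phi 1 z Hd Hp HA ltac:(lra).
  have H0 := tphi_nonneg p phi rho z Hd Hp HA Hr.
  destruct (Rle_lt_dec rho 1) as [Hle|Hlt].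
  - have := tphi_nondecr p phi z Hd Hp HA rho 1 Hr Hle. simpl. nra.
  - set t := / (2 * rho - 1). have Ht : 0 < t < 1.
    { unfold t. split; [apply Rinv_0_lt_compat; lra|]. rewrite -Rinv_1. apply Rinv_lt_contravar; lra. }
    have := tphi_concave p phi z Hd Hp HA rho (1/2) t Hr ltac:(lra) ltac:(lra). simpl.
    have -> : t * rho + (1 - t) * (1 / 2) = 1 by unfold t; field; lra.
    have := tphi_nonneg p phi (1/2) z Hd Hp HA ltac:(lra). intros H2 H3.
    have : t * ptilde p phi rho z <= ptilde p phi 1 z by nra.
    intro H4. have := Rmult_le_compat_l (2 * rho - 1) _ _ ltac:(lra) H4.
    have -> : (2 * rho - 1) * (t * ptilde p phi rho z) = ptilde p phi rho z by unfold t; field; lra. nra.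
Qed.
Lemma inv_conj p : 1 < p -> 1 / conj_exp p * p = p - 1.
Proof. intro H; unfold conj_exp; field; lra. Qed.

Lemma part3 {d} p (phi : R -> vec d -> R) : (1 <= d)%nat -> 1 < p -> admissible p phi ->
  exists a b, 0 <= a /\ 0 <= b /\ ~ (a = 0 /\ b = 0) /\
       forall rho (z w : vec d), 0 < rho ->
         ptilde p phi rho z <= (a + b * rho) * rpow (enorm z) (conj_exp p) /\
         rpow (a + b * rho) (1 - p) * rpow (enorm w) p <= phi rho w.
Proof.
  intros Hd Hp HA. have Hq := conj_exp_gt1 p Hp.
  have HN1 := adm_norm p phi 1 Hp HA ltac:(lra). fold (Nrho p phi 1) in HN1.
  destruct (dual_upper _ Hd HN1) as [K [HK Hb]].
  set a := rpow K (conj_exp p). have Ha : 0 < a by apply rpow_pos.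
  have First : forall rho z, 0 < rho -> ptilde p phi rho z <= (a + 2 * a * rho) * rpow (enorm z) (conj_exp p).
  { intros rho z Hr. eapply Rle_trans; [apply tphi_lin; auto|].
    rewrite (proj2 (ptilde_core p phi 1 z Hd Hp HA ltac:(lra))).
    have := rpow_bound_up (dualn (Nrho p phi 1) z) K (enorm z) (conj_exp p) ltac:(lra) (dualn_nonneg _ z Hd HN1) ltac:(lra) (enorm_nonneg z) (Hb z).
    fold a. have := rpow_nonneg (enorm z) (conj_exp p). intros. nra. }
  exists a, (2 * a). split; [lra|split; [lra|split; [lra|]]].
  intros rho z w Hr. split; [apply First; auto|].
  set A := a + 2 * a * rho. have HA0 : 0 < A by unfold A; nra.
  case: (classic (w = vzero)) => [->|Hw].
  { rewrite enorm_zero rpow_0 Rmult_0_r. apply (proj1 HA); auto. }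
  have He := enorm_pos w Hw. set e := enorm w.
  have HNr := adm_norm p phi rho Hp HA Hr. fold (Nrho p phi rho) in HNr.
  set D := dualn (Nrho p phi rho) w. have HD : 0 <= D by apply dualn_nonneg.
  have HT : rpow D (conj_exp p) <= A * rpow e (conj_exp p).
  { rewrite /D -(proj2 (ptilde_core p phi rho w Hd Hp HA Hr)). apply First; auto. }
  have HD2 : D <= rpow A (1 / conj_exp p) * e.
  { have := rpow_le _ _ (1 / conj_exp p) ltac:(apply Rdiv_lt_0_compat; lra) (conj (rpow_nonneg D _) HT).
    rewrite rpow_rpow // rpow_mult; [|lra|apply rpow_nonneg]. rewrite rpow_rpow; [|unfold e; apply enorm_nonneg].
    have -> : conj_exp p * (1 / conj_exp p) = 1 by field; lra. rewrite !rpow_1 //. unfold e; apply enorm_nonneg. }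
  have Hdl := dual_le _ w w Hd HNr. fold D in Hdl. rewrite enorm_sq in Hdl. fold e in Hdl.
  set B := rpow A (1 / conj_exp p). have HB : 0 < B by apply rpow_pos.
  set Nw := Nrho p phi rho w. have HNw : 0 <= Nw by apply HNr.
  have : e * e <= B * e * Nw. { apply (Rle_trans _ _ _ Hdl). apply Rmult_le_compat_r; auto. }
  intro H1. have He' : 0 < e := He.
  have H2 : e <= B * Nw. { apply (Rmult_le_reg_r e); [exact He'|]. have : B * e * Nw = B * Nw * e by ring. lra. }
  have H3 : / B * e <= Nw. { apply (Rmult_le_reg_l B); auto. have -> : B * (/ B * e) = e by field; lra. lra. }
  have := rpow_bound_lo Nw (/ B) e p ltac:(lra) ltac:(left; apply Rinv_0_lt_compat; lra) ltac:(lra) H3.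
  have -> : rpow Nw p = phi rho w. { unfold Nw, Nrho. apply pow_back; [apply (proj1 HA); auto|lra]. }
  have -> : rpow (/ B) p = rpow A (1 - p); [|auto].
  rewrite rpow_inv_base // /B rpow_rpow; [|lra]. rewrite inv_conj //.
  have -> : 1 - p = - (p - 1) by ring. rewrite rpow_opp //.
Qed.

Lemma part4 {d} p (phi : R -> vec d -> R) : (1 <= d)%nat -> 1 < p -> admissible p phi ->
    (forall r0 r1, 0 < r0 -> r0 <= r1 ->
       exists C, 0 < C /\
         forall rho (w z : vec d), r0 <= rho <= r1 ->
           / C * rpow (enorm w) p <= phi rho w /\ phi rho w <= C * rpow (enorm w) p /\
           / C * rpow (enorm z) (conj_exp p) <= ptilde p phi rho z /\
           ptilde p phi rho z <= C * rpow (enorm z) (conj_exp p)).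
Proof.
  intros Hd Hp HA r0 r1 H0 H01. have Hq := conj_exp_gt1 p Hp.
  have HN0 := adm_norm p phi r0 Hp HA H0. fold (Nrho p phi r0) in HN0.
  have HN1 := adm_norm p phi r1 Hp HA ltac:(lra). fold (Nrho p phi r1) in HN1.
  destruct (norm_upper _ Hd HN0) as [L0 [HL0 B1]].
  destruct (norm_lower _ Hd HN1) as [c1 [Hc1 B2]].
  destruct (dual_upper _ Hd HN1) as [K1 [HK1 B3]].
  destruct (dual_lower _ Hd HN0) as [k0 [Hk0 B4]].
  set U1 := rpow L0 p. set l1 := rpow c1 p. set U2 := rpow K1 (conj_exp p). set l2 := rpow k0 (conj_exp p).
  have HU1 : 0 < U1 by apply rpow_pos. have Hl1 : 0 < l1 by apply rpow_pos.
  have HU2 : 0 < U2 by apply rpow_pos. have Hl2 : 0 < l2 by apply rpow_pos.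
  set C := Rmax (Rmax U1 U2) (Rmax (/ l1) (/ l2)).
  have HC1 : U1 <= C by unfold C; eapply Rle_trans; [apply Rmax_l|apply Rmax_l].
  have HC2 : U2 <= C by unfold C; eapply Rle_trans; [apply Rmax_r|apply Rmax_l].
  have HC3 : / l1 <= C by unfold C; eapply Rle_trans; [apply Rmax_l|apply Rmax_r].
  have HC4 : / l2 <= C by unfold C; eapply Rle_trans; [apply Rmax_r|apply Rmax_r].
  have HC : 0 < C by lra.
  have I1 : / C <= l1. { rewrite -(Rinv_inv l1). apply Rinv_le_contravar; auto. apply Rinv_0_lt_compat; lra. }
  have I2 : / C <= l2. { rewrite -(Rinv_inv l2). apply Rinv_le_contravar; auto. apply Rinv_0_lt_compat; lra. }
  exists C. split; auto. intros rho w z [Hr0 Hr1]. have Hr : 0 < rho by lra.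
  have Ew := rpow_nonneg (enorm w) p. have Ez := rpow_nonneg (enorm z) (conj_exp p).
  have P0 : phi r0 w = rpow (Nrho p phi r0 w) p by unfold Nrho; rewrite pow_back //; [apply (proj1 HA)|]; lra.
  have P1 : phi r1 w = rpow (Nrho p phi r1 w) p by unfold Nrho; rewrite pow_back //; [apply (proj1 HA)|]; lra.
  split; [|split; [|split]].
  - have := adm_nonincr p phi rho r1 w Hp HA Hr Hr1. rewrite P1.
    have := rpow_bound_lo (Nrho p phi r1 w) c1 (enorm w) p ltac:(lra) ltac:(lra) (enorm_nonneg w) (B2 w). fold l1.
    have := Rmult_le_compat_r _ _ _ Ew I1. lra.
  - have := adm_nonincr p phi r0 rho w Hp HA H0 Hr0. rewrite P0.
    have := rpow_bound_up (Nrho p phi r0 w) L0 (enorm w) p ltac:(lra) (proj1 HN0 w) ltac:(lra) (enorm_nonneg w) (B1 w). fold U1.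
    have := Rmult_le_compat_r _ _ _ Ew HC1. lra.
  - have := tphi_nondecr p phi z Hd Hp HA r0 rho H0 Hr0. simpl.
    rewrite (proj2 (ptilde_core p phi r0 z Hd Hp HA H0)).
    have := rpow_bound_lo (dualn (Nrho p phi r0) z) k0 (enorm z) (conj_exp p) ltac:(lra) ltac:(lra) (enorm_nonneg z) (B4 z). fold l2.
    have := Rmult_le_compat_r _ _ _ Ez I2. lra.
  - have := tphi_nondecr p phi z Hd Hp HA rho r1 Hr Hr1. simpl.
    rewrite (proj2 (ptilde_core p phi r1 z Hd Hp HA ltac:(lra))).
    have := rpow_bound_up (dualn (Nrho p phi r1) z) K1 (enorm z) (conj_exp p) ltac:(lra) (dualn_nonneg _ z Hd HN1) ltac:(lra) (enorm_nonneg z) (B3 z). fold U2.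
    have := Rmult_le_compat_r _ _ _ Ez HC2. lra.
Qed.
Lemma tphi_convex_z {d} p (phi : R -> vec d -> R) rho : (1 <= d)%nat -> 1 < p -> admissible p phi -> 0 < rho ->
  convex_vec (ptilde p phi rho).
Proof.
  intros Hd Hp HA Hr u v t Ht. have Hq := conj_exp_gt1 p Hp.
  have Lu := proj1 (ptilde_core p phi rho u Hd Hp HA Hr).
  have Lv := proj1 (ptilde_core p phi rho v Hd Hp HA Hr).
  set zm := vadd (vscale t u) (vscale (1 - t) v).
  have Lm := proj1 (ptilde_core p phi rho zm Hd Hp HA Hr).
  have : ptilde p phi rho zm / conj_exp p <= t * (ptilde p phi rho u / conj_exp p) + (1 - t) * (ptilde p phi rho v / conj_exp p).
  { apply (lub_le _ _ _ Lm). intros y [w ->].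
    have := le_lub _ _ (dot u w - phi rho w / p) Lu ltac:(exists w; reflexivity).
    have := le_lub _ _ (dot v w - phi rho w / p) Lv ltac:(exists w; reflexivity).
    rewrite /zm dot_add_l !dot_scale_l. intros H1 H2.
    have : dot u w - phi rho w / p <= ptilde p phi rho u / conj_exp p := H2.
    have : dot v w - phi rho w / p <= ptilde p phi rho v / conj_exp p := H1.
    intros H3 H4. have := Rmult_le_compat_l t _ _ ltac:(lra) H4. have := Rmult_le_compat_l (1 - t) _ _ ltac:(lra) H3.
    lra. }
  intro H. have := Rmult_le_compat_l (conj_exp p) _ _ ltac:(lra) H.
  have -> : conj_exp p * (ptilde p phi rho zm / conj_exp p) = ptilde p phi rho zm by field; lra.
  have -> : conj_exp p * (t * (ptilde p phi rho u / conj_exp p) + (1 - t) * (ptilde p phi rho v / conj_exp p))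
    = t * ptilde p phi rho u + (1 - t) * ptilde p phi rho v by field; lra. auto.
Qed.

Lemma conv_fwd {d} p (phi : R -> vec d -> R) : (1 <= d)%nat -> 1 < p -> admissible p phi ->
     exists tphi : R -> vec d -> R,
       nonneg_fun tphi /\
       (forall rho, 0 < rho -> convex_vec (tphi rho)) /\
       homog (conj_exp p) tphi /\
       (forall rho z, 0 < rho -> z <> vzero -> 0 < tphi rho z) /\
       (forall z, concave_pos (fun rho => tphi rho z)) /\
       (forall rho w, 0 < rho ->
          is_lub (fun y => exists z : vec d, y = dot w z - tphi rho z / conj_exp p)
                 (phi rho w / p)).
Proof.
  intros Hd Hp HA. have Hq := conj_exp_gt1 p Hp. exists (ptilde p phi).
  split; [intros rho z Hr; apply tphi_nonneg; auto|].
  split; [intros rho Hr; apply tphi_convex_z; auto|].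
  split; [intros rho l z Hr; exact (proj2 (proj2 (proj2 (proj2 (part1 p phi rho Hd Hp HA Hr)))) l z)|].
  split.
  { intros rho z Hr Hz. rewrite (proj2 (ptilde_core p phi rho z Hd Hp HA Hr)). apply rpow_pos, dualn_pos; auto.
    apply adm_norm; auto. }
  split; [intro z; apply tphi_concave; auto|].
  intros rho w Hr. have HN := adm_norm p phi rho Hp HA Hr. fold (Nrho p phi rho) in HN.
  have HD := dualn_norm _ Hd HN.
  have L := legendre_dual (dualn (Nrho p phi rho)) (conj_exp p) w Hd HD Hq.
  rewrite conj_exp_invol // in L.
  have E : dualn (dualn (Nrho p phi rho)) w = Nrho p phi rho w.
  { apply sup_eq. apply (is_lub_ext _ _ _ (bidual _ w Hd HN)). intro y.
    split; intros [z [Hz ->]]; exists z; split; auto. }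
  rewrite E in L. unfold Nrho in L. rewrite pow_back in L; [|apply (proj1 HA); auto|lra].
  apply (is_lub_ext _ _ _ L). intro y. split; intros [z ->]; exists z;
    rewrite (proj2 (ptilde_core p phi rho z Hd Hp HA Hr)) //.
Qed.

Lemma conv_bwd {d} p (phi : R -> vec d -> R) : (1 <= d)%nat -> 1 < p -> nonneg_fun phi ->
     (exists tphi : R -> vec d -> R,
       nonneg_fun tphi /\
       (forall rho, 0 < rho -> convex_vec (tphi rho)) /\
       homog (conj_exp p) tphi /\
       (forall rho z, 0 < rho -> z <> vzero -> 0 < tphi rho z) /\
       (forall z, concave_pos (fun rho => tphi rho z)) /\
       (forall rho w, 0 < rho ->
          is_lub (fun y => exists z : vec d, y = dot w z - tphi rho z / conj_exp p)
                 (phi rho w / p))) -> admissible p phi.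
Proof.
  intros Hd Hp Hn [psi [Pn [Pc [Ph [Pp [Pcc Pl]]]]]]. have Hq := conj_exp_gt1 p Hp.
  set q := conj_exp p.
  have Rep : forall rho w, 0 < rho ->
    phi rho w = rpow (dualn (fun z => rpow (psi rho z) (1 / q)) w) p.
  { intros rho w Hr.
    have HM : is_norm (fun z => rpow (psi rho z) (1 / q)).
    { apply pow_norm; [unfold q; lra|intro; apply Pn; auto|apply Pc; auto|intros; apply Ph; auto|intros; apply Pp; auto]. }
    have L := legendre_dual _ q w Hd HM Hq. unfold q in L. rewrite conj_exp_invol // in L.
    have L' : is_lub (fun y => exists z : vec d, y = dot w z - psi rho z / conj_exp p)
               (rpow (dualn (fun z => rpow (psi rho z) (1 / q)) w) p / p).
    { apply (is_lub_ext _ _ _ L). intro y. split; intros [z ->]; exists z; rewrite pow_back //; try (unfold q; lra);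
      apply Pn; auto. }
    have := is_lub_u _ _ _ (Pl rho w Hr) L'. intro E.
    apply (Rmult_eq_reg_r (/ p)); [|apply Rinv_neq_0_compat; lra]. exact E. }
  have HMn : forall rho, 0 < rho -> is_norm (fun z => rpow (psi rho z) (1 / q)).
  { intros rho Hr. apply pow_norm; [unfold q; lra|intro; apply Pn; auto|apply Pc; auto|intros; apply Ph; auto|intros; apply Pp; auto]. }
  split; [exact Hn|split; [|split]].
  - intros r1 r2 w1 w2 t H1 H2 Ht. set m := t * r1 + (1 - t) * r2. have Hm : 0 < m by unfold m; nra.
    set wm := vadd (vscale t w1) (vscale (1 - t) w2).
    have : phi m wm / p <= t * (phi r1 w1 / p) + (1 - t) * (phi r2 w2 / p).
    { apply (lub_le _ _ _ (Pl m wm Hm)). intros y [z ->].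
      have := le_lub _ _ (dot w1 z - psi r1 z / conj_exp p) (Pl r1 w1 H1) ltac:(exists z; reflexivity).
      have := le_lub _ _ (dot w2 z - psi r2 z / conj_exp p) (Pl r2 w2 H2) ltac:(exists z; reflexivity).
      have Cc := Pcc z r1 r2 t H1 H2 Ht. simpl in Cc. fold m in Cc.
      rewrite /wm dot_add_l !dot_scale_l. intros A1 A2.
      have B1 := Rmult_le_compat_l t _ _ ltac:(lra) A2. have B2 := Rmult_le_compat_l (1 - t) _ _ ltac:(lra) A1.
      have : t * (psi r1 z / conj_exp p) + (1 - t) * (psi r2 z / conj_exp p) <= psi m z / conj_exp p.
      { have -> : t * (psi r1 z / conj_exp p) + (1 - t) * (psi r2 z / conj_exp p)
          = (t * psi r1 z + (1 - t) * psi r2 z) / conj_exp p by field; lra.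
        unfold Rdiv. apply Rmult_le_compat_r; [left; apply Rinv_0_lt_compat; lra|lra]. }
      lra. }
    intro H. have := Rmult_le_compat_l p _ _ ltac:(lra) H.
    have -> : p * (phi m wm / p) = phi m wm by field; lra.
    have -> : p * (t * (phi r1 w1 / p) + (1 - t) * (phi r2 w2 / p)) = t * phi r1 w1 + (1 - t) * phi r2 w2 by field; lra.
    auto.
  - intros rho l w Hr. rewrite !Rep //. rewrite (proj1 (proj2 (proj2 (dualn_norm _ Hd (HMn rho Hr))))).
    rewrite rpow_mult //. apply Rabs_pos. apply dualn_nonneg; auto.
  - exists 1. split; [lra|]. intros w Hw. rewrite Rep; [|lra]. apply rpow_pos, dualn_pos; auto. apply HMn; lra.
Qed.

Theorem mainTheorem1 (d : nat) (p : R) (Hd : (1 <= d)%nat) (Hp : 1 < p) :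
  let q := conj_exp p in
  (forall phi : R -> vec d -> R, admissible p phi ->
    let tphi := ptilde p phi in
    (* (1) *)
    (forall rho, 0 < rho ->
       is_norm (fun w => rpow (phi rho w) (1 / p)) /\
       is_norm (fun z => rpow (tphi rho z) (1 / q)) /\
       (forall z, is_lub (fun y => exists w : vec d, w <> vzero /\
                            y = dot w z / rpow (phi rho w) (1 / p))
                         (rpow (tphi rho z) (1 / q))) /\
       (forall w, is_lub (fun y => exists z : vec d, z <> vzero /\
                            y = dot w z / rpow (tphi rho z) (1 / q))
                         (rpow (phi rho w) (1 / p))) /\
       (forall l z, tphi rho (vscale l z) = rpow (Rabs l) q * tphi rho z)) /\
    (* (2) *)
    (forall rho z, 0 < rho -> legendre_finite p phi rho z /\ 0 <= tphi rho z) /\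
    (forall z, concave_pos (fun rho => tphi rho z) /\ nondecr_pos (fun rho => tphi rho z)) /\
    (forall w, convex_pos (fun rho => phi rho w) /\ nonincr_pos (fun rho => phi rho w)) /\
    (* (3) *)
    (exists a b, 0 <= a /\ 0 <= b /\ ~ (a = 0 /\ b = 0) /\
       forall rho (z w : vec d), 0 < rho ->
         tphi rho z <= (a + b * rho) * rpow (enorm z) q /\
         rpow (a + b * rho) (1 - p) * rpow (enorm w) p <= phi rho w) /\
    (* (4) *)
    (forall r0 r1, 0 < r0 -> r0 <= r1 ->
       exists C, 0 < C /\
         forall rho (w z : vec d), r0 <= rho <= r1 ->
           / C * rpow (enorm w) p <= phi rho w /\ phi rho w <= C * rpow (enorm w) p /\
           / C * rpow (enorm z) q <= tphi rho z /\ tphi rho z <= C * rpow (enorm z) q))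
  /\
  (* converse characterization *)
  (forall phi : R -> vec d -> R, nonneg_fun phi ->
    (admissible p phi <->
     exists tphi : R -> vec d -> R,
       nonneg_fun tphi /\
       (forall rho, 0 < rho -> convex_vec (tphi rho)) /\
       homog q tphi /\
       (forall rho z, 0 < rho -> z <> vzero -> 0 < tphi rho z) /\
       (forall z, concave_pos (fun rho => tphi rho z)) /\
       (forall rho w, 0 < rho ->
          is_lub (fun y => exists z : vec d, y = dot w z - tphi rho z / q)
                 (phi rho w / p)))).
Proof.
  intro q. split.
  - intros phi HA tphi. split; [|split; [|split; [|split; [|split]]]].
    + intros rho Hr. exact (part1 p phi rho Hd Hp HA Hr).
    + intros rho z Hr. split.
      * exists (ptilde p phi rho z / conj_exp p). apply (proj1 (ptilde_core p phi rho z Hd Hp HA Hr)).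
      * apply tphi_nonneg; auto.
    + intro z. split; [apply tphi_concave|apply tphi_nondecr]; auto.
    + intro w. split.
      * intros x y t Hx Hy Ht. have := proj1 (proj2 HA) x y w w t Hx Hy Ht.
        have -> : vadd (vscale t w) (vscale (1 - t) w) = w by vring. auto.
      * intros x y Hx Hxy. apply (adm_nonincr p); auto.
    + exact (part3 p phi Hd Hp HA).
    + exact (part4 p phi Hd Hp HA).
  - intros phi Hn. split.
    + intro HA. exact (conv_fwd p phi Hd Hp HA).
    + intro H. exact (conv_bwd p phi Hd Hp Hn H).
Qed.
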